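(* If $\mathcal{O}$ is a decomposable set of Scott-open modalities, then the open extension of the relation of applicative $\mathcal{O}$-bisimilarity is compatible.
   Context: Language: types $\tau ::= \mathbf{1} \mid \mathbf{N} \mid \tau \to \tau'$; signature $\Sigma$ of effect operations with arities $\alpha^n\to\alpha$, $\mathbf{N}\times\alpha^n\to\alpha$, $\alpha^{\mathbf{N}}\to\alpha$ or $\mathbf{N}\times\alpha^{\mathbf{N}}\to\alpha$. Values $V ::= * \mid Z \mid S(V) \mid \lambda x{:}\tau.M \mid x$; computations $M ::= VW \mid \mathbf{return}\,V \mid \mathbf{let}\ M\Rightarrow x\ \mathbf{in}\ N \mid \mathbf{fix}(V) \mid \mathbf{case}\ V\ \mathbf{of}\ \{Z\Rightarrow M; S(x)\Rightarrow N\} \mid \sigma(M_0,\dots) \mid \sigma(V;M_0,\dots) \mid \sigma(V)\mid\sigma(V;W)$, simply typed call-by-value. $\mathit{Val}(\tau)$, $\mathit{Com}(\tau)$: closed values/computations. Effect trees $TX$: possibly infinite trees with leaves $\bot$ or elements of $X$ and internal nodes labelled by effect operations (or $\sigma_m$, $m\in\mathbb{N}$) with $n$ or $\mathbb{N}$-many children according to arity; $t\le t'$ iff $t$ results from $t'$ by replacing subtrees with $\bot$. $\mu:TTX\to TX$ flattens trees of trees. Each $M\in\mathit{Com}(\tau)$ has an operational effect tree $|M|\in T(\mathit{Val}(\tau))$ from call-by-value evaluation. Modalities: set $\mathcal{O}$, $[\![o]\!]\subseteq T\mathbf{1}$; $t[\in P]$ replaces leaves in $P$ by $*$ and others by $\bot$;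 $o(A)=\{t\mid t[\in A]\in[\![o]\!]\}$. Scott-open: $[\![o]\!]$ upward closed, and if the supremum of an ascending chain lies in $[\![o]\!]$ then some chain element does. Decomposability: $\mathcal{T}$ is the least class containing $o(\top),o(\bot)$ closed under arbitrary $\bigvee,\bigwedge$, with $[\![o(\top)]\!]=o(\{*\})$, $[\![o(\bot)]\!]=o(\emptyset)$. $t\trianglelefteq t'$ iff $\forall\Phi\in\mathcal{T}$, $t\in[\![\Phi]\!]\Rightarrow t'\in[\![\Phi]\!]$; $r\preccurlyeq r'$ on $TT\mathbf{1}$ iff $\forall o\,\forall\Phi\in\mathcal{T}$, $r\in o([\![\Phi]\!])\Rightarrow r'\in o([\![\Phi]\!])$. $\mathcal{O}$ decomposable: $r\preccurlyeq r'\Rightarrow\mu r\trianglelefteq\mu r'$. Bisimilarity: $t\,\mathcal{O}(R)\,t'$ iff $\forall A\,\forall o$, $t\in o(A)\Rightarrow t'\in o(R[A])$, $R[A]=\{y\mid\exists x\in A,xRy\}$. An applicative $\mathcal{O}$-simulation is a family $R^v_\tau\subseteq\mathit{Val}(\tau)^2$, $R^c_\tau\subseteq\mathit{Com}(\tau)^2$ with (1) $V R^v_{\mathbf{N}}W\Rightarrow V=W$; (2) $MR^c_\tau N\Rightarrow|M|\,\mathcal{O}(R^v_\tau)\,|N|$; (3) $VR^v_{\tau'\to\tau}W\Rightarrow\forall U$, $VU\,R^c_\tau\,WU$. Applicative $\mathcal{O}$-bisimilarity is the largest symmetric applicative $\mathcal{O}$-simulation. Open extension / compatibility: $\Gamma\vdash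 M\,R^\circ\,N$ iff $M[\vec V/\vec x]\,R\,N[\vec V/\vec x]$ for all closed value instantiations of $\Gamma$; compatible means relating each variable to itself and closure under every term constructor. *)

(* Defs.v *)
From Stdlib Require Import List Arith ClassicalEpsilon.
Import ListNotations.

Set Implicit Arguments.

Inductive ty : Type :=
| One : ty
| Nat : ty
| Arr : ty -> ty -> ty.

Definition ctx := list ty.

(* Signatures of effect operations.  Arities:
     AFin n  : alpha^n -> alpha
     APFin n : N x alpha^n -> alpha
     AInf    : alpha^N -> alpha
     APInf   : N x alpha^N -> alpha                                       *)

Inductive arity : Type :=
| AFin : nat -> arity
| APFin : nat -> arity
| AInf : arity
| APInf : arity.

Record signature : Type := Signature {
  op :> Type;
  arity_of : op -> arity
}.
Arguments arity_of {_} _.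

(* parameter carried by a node labelled sigma (sigma_m for parameterised ones) *)
Definition par (a : arity) : Type :=
  match a with
  | AFin _ | AInf => unit
  | APFin _ | APInf => nat
  end.

(* index set of the children of a node *)
Definition chi (a : arity) : Type :=
  match a with
  | AFin n | APFin n => { i : nat | i < n }
  | AInf | APInf => nat
  end.

Section Language.
Variable Sg : signature.

(* Raw terms, de Bruijn indices (VVar 0 is the innermost bound variable). *)

Inductive val : Type :=
| VUnit : val
| VZ : val
| VS : val -> val
| VLam : ty -> com -> val            (* \x:tau. M  (M binds index 0) *)
| VVar : nat -> val
with com : Type :=
| CApp : val -> val -> com
| CRet : val -> com
| CLet : com -> com -> com           (* let M => x in N  (N binds index 0) *)
| CFix : val -> com
| CCase : val -> com -> com -> com   (* case V of {Z => M; S(x) => N} (N binds 0) *)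
| COpF : Sg -> list com -> com
| COpPF : Sg -> val -> list com -> com
| COpI : Sg -> val -> com
| COpPI : Sg -> val -> val -> com.

Inductive tv : ctx -> val -> ty -> Prop :=
| tv_var G n t : nth_error G n = Some t -> tv G (VVar n) t
| tv_unit G : tv G VUnit One
| tv_zero G : tv G VZ Nat
| tv_succ G v : tv G v Nat -> tv G (VS v) Nat
| tv_lam G t t' m : tc (t :: G) m t' -> tv G (VLam t m) (Arr t t')
with tc : ctx -> com -> ty -> Prop :=
| tc_app G v w t t' : tv G v (Arr t t') -> tv G w t -> tc G (CApp v w) t'
| tc_ret G v t : tv G v t -> tc G (CRet v) t
| tc_let G m n t t' : tc G m t -> tc (t :: G) n t' -> tc G (CLet m n) t'
| tc_fix G v r t : tv G v (Arr (Arr r t) (Arr r t)) -> tc G (CFix v) (Arr r t)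
| tc_case G v m n t :
    tv G v Nat -> tc G m t -> tc (Nat :: G) n t -> tc G (CCase v m n) t
| tc_opF G (s : Sg) ms n t :
    arity_of s = AFin n -> length ms = n -> (forall m, In m ms -> tc G m t) ->
    tc G (COpF s ms) t
| tc_opPF G (s : Sg) v ms n t :
    arity_of s = APFin n -> tv G v Nat -> length ms = n ->
    (forall m, In m ms -> tc G m t) -> tc G (COpPF s v ms) t
| tc_opI G (s : Sg) v t :
    arity_of s = AInf -> tv G v (Arr Nat t) -> tc G (COpI s v) t
| tc_opPI G (s : Sg) v w t :
    arity_of s = APInf -> tv G v Nat -> tv G w (Arr Nat t) -> tc G (COpPI s v w) t.

Definition upr (f : nat -> nat) : nat -> nat :=
  fun n => match n with 0 => 0 | S k => S (f k) end.

Fixpoint ren_v (f : nat -> nat) (v : val) : val :=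
  match v with
  | VUnit => VUnit
  | VZ => VZ
  | VS v => VS (ren_v f v)
  | VLam t m => VLam t (ren_c (upr f) m)
  | VVar n => VVar (f n)
  end
with ren_c (f : nat -> nat) (m : com) : com :=
  match m with
  | CApp v w => CApp (ren_v f v) (ren_v f w)
  | CRet v => CRet (ren_v f v)
  | CLet m n => CLet (ren_c f m) (ren_c (upr f) n)
  | CFix v => CFix (ren_v f v)
  | CCase v m n => CCase (ren_v f v) (ren_c f m) (ren_c (upr f) n)
  | COpF s ms => COpF s (map (ren_c f) ms)
  | COpPF s v ms => COpPF s (ren_v f v) (map (ren_c f) ms)
  | COpI s v => COpI s (ren_v f v)
  | COpPI s v w => COpPI s (ren_v f v) (ren_v f w)
  end.

Definition ups (g : nat -> val) : nat -> val :=
  fun n => match n with 0 => VVar 0 | S k => ren_v S (g k) end.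

Fixpoint subst_v (g : nat -> val) (v : val) : val :=
  match v with
  | VUnit => VUnit
  | VZ => VZ
  | VS v => VS (subst_v g v)
  | VLam t m => VLam t (subst_c (ups g) m)
  | VVar n => g n
  end
with subst_c (g : nat -> val) (m : com) : com :=
  match m with
  | CApp v w => CApp (subst_v g v) (subst_v g w)
  | CRet v => CRet (subst_v g v)
  | CLet m n => CLet (subst_c g m) (subst_c (ups g) n)
  | CFix v => CFix (subst_v g v)
  | CCase v m n => CCase (subst_v g v) (subst_c g m) (subst_c (ups g) n)
  | COpF s ms => COpF s (map (subst_c g) ms)
  | COpPF s v ms => COpPF s (subst_v g v) (map (subst_c g) ms)
  | COpI s v => COpI s (subst_v g v)
  | COpPI s v w => COpPI s (subst_v g v) (subst_v g w)
  end.

Definition scons (v : val) : nat -> val :=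
  fun n => match n with 0 => v | S k => VVar k end.
Definition subst1 (m : com) (v : val) : com := subst_c (scons v) m.

Fixpoint numeral (n : nat) : val :=
  match n with 0 => VZ | S k => VS (numeral k) end.

Fixpoint num_of (v : val) : option nat :=
  match v with
  | VZ => Some 0
  | VS v => match num_of v with Some k => Some (S k) | None => None end
  | _ => None
  end.

CoInductive tree (X : Type) : Type :=
| Bot : tree X
| Leaf : X -> tree X
| Node : forall s : Sg, par (arity_of s) -> (chi (arity_of s) -> tree X) -> tree X.
Arguments Bot {X}.

CoInductive tle {X : Type} : tree X -> tree X -> Prop :=
| tle_bot t : tle Bot t
| tle_leaf x : tle (Leaf x) (Leaf x)
| tle_node s p k k' :
    (forall i, tle (k i) (k' i)) -> tle (Node s p k) (Node s p k').

CoFixpoint mu {X : Type} (r : tree (tree X)) : tree X :=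
  match r with
  | Bot => Bot
  | Leaf t => t
  | Node s p k => Node s p (fun i => mu (k i))
  end.

CoFixpoint restrict {X : Type} (P : X -> Prop) (t : tree X) : tree unit :=
  match t with
  | Bot => Bot
  | Leaf x => if excluded_middle_informative (P x) then Leaf tt else Bot
  | Node s p k => Node s p (fun i => restrict P (k i))
  end.

(* Operational effect tree |M| via a stack machine *)

Definition config : Type := (list com * com)%type.  (* stack of continuations, term *)

Definition step (c : config) : option config :=
  let (stk, m) := c in
  match m with
  | CApp (VLam _ b) v => Some (stk, subst1 b v)
  | CRet v => match stk with
              | [] => None
              | n :: stk' => Some (stk', subst1 n v)
              end
  | CLet m n => Some (n :: stk, m)
  | CFix v =>
      (* fix(V) ~> V (\x:rho. let fix(V) => y in y x) *)
      match v with
      | VLam (Arr r _) _ =>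
          Some (stk, CApp v (VLam r (CLet (CFix (ren_v S v))
                                       (CApp (VVar 0) (VVar 1)))))
      | _ => None
      end
  | CCase VZ m _ => Some (stk, m)
  | CCase (VS v) _ n => Some (stk, subst1 n v)
  | _ => None
  end.

Definition terminal (c : config) : bool :=
  match c with
  | ([], CRet _) => true
  | (_, COpF _ _) | (_, COpPF _ _ _) | (_, COpI _ _) | (_, COpPI _ _ _) => true
  | _ => false
  end.

Fixpoint run (k : nat) (c : config) : option config :=
  if terminal c then Some c else
  match k with
  | 0 => None
  | S k' => match step c with Some c' => run k' c' | None => None end
  end.

Definition dflt : com := CRet VUnit.

CoFixpoint optree_cfg (c : config) : tree val :=
  match excluded_middle_informative (exists k, run k c <> None) with
  | right _ => Bot
  | left H =>
    match run (proj1_sig (constructive_indefinite_description _ H)) c with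
    | None => Bot
    | Some (stk, m) =>
      match m with
      | CRet v => Leaf v
      | COpF s ms =>
          match arity_of s as a return (arity_of s = a -> tree val) with
          | AFin n => fun e =>
              Node s (eq_rect_r par (tt : par (AFin n)) e)
                (fun i => optree_cfg
                   (stk, nth (proj1_sig (eq_rect _ chi i _ e : chi (AFin n))) ms dflt))
          | _ => fun _ => Bot
          end eq_refl
      | COpPF s v ms =>
          match num_of v with
          | None => Bot
          | Some p =>
          match arity_of s as a return (arity_of s = a -> tree val) with
          | APFin n => fun e =>
              Node s (eq_rect_r par (p : par (APFin n)) e)
                (fun i => optree_cfg
                   (stk, nth (proj1_sig (eq_rect _ chi i _ e : chi (APFin n))) ms dflt))
          | _ => fun _ => Bot
          end eq_refl
          end
      | COpI s v =>
          match arity_of s as a return (arity_of s = a -> tree val) with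
          | AInf => fun e =>
              Node s (eq_rect_r par (tt : par AInf) e)
                (fun i => optree_cfg
                   (stk, CApp v (numeral (eq_rect _ chi i _ e : chi AInf))))
          | _ => fun _ => Bot
          end eq_refl
      | COpPI s v w =>
          match num_of v with
          | None => Bot
          | Some p =>
          match arity_of s as a return (arity_of s = a -> tree val) with
          | APInf => fun e =>
              Node s (eq_rect_r par (p : par APInf) e)
                (fun i => optree_cfg
                   (stk, CApp w (numeral (eq_rect _ chi i _ e : chi APInf))))
          | _ => fun _ => Bot
          end eq_refl
          end
      | _ => Bot
      end
    end
  end.

Definition optree (m : com) : tree val := optree_cfg ([], m).

Section Modalities.
Variable O : Type.
Variable osem : O -> tree unit -> Prop.

Definition omod {X : Type} (o : O) (A : X -> Prop) : tree X -> Prop :=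
  fun t => osem o (restrict A t).

Definition is_sup (c : nat -> tree unit) (t : tree unit) : Prop :=
  (forall n, tle (c n) t) /\ (forall u, (forall n, tle (c n) u) -> tle t u).

Definition scott_open (P : tree unit -> Prop) : Prop :=
  (forall t t', tle t t' -> P t -> P t') /\
  (forall c : nat -> tree unit, (forall n, tle (c n) (c (S n))) ->
     forall t, is_sup c t -> P t -> exists n, P (c n)).

Inductive tform : Type :=
| FTop : O -> tform
| FBot : O -> tform
| FOr : forall I : Type, (I -> tform) -> tform
| FAnd : forall I : Type, (I -> tform) -> tform.

Fixpoint fsem (phi : tform) : tree unit -> Prop :=
  match phi with
  | FTop o => omod o (fun _ : unit => True)
  | FBot o => omod o (fun _ : unit => False)
  | FOr f => fun t => exists i, fsem (f i) t
  | FAnd f => fun t => forall i, fsem (f i) t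
  end.

Definition tri_le (t t' : tree unit) : Prop :=
  forall phi, fsem phi t -> fsem phi t'.

Definition curly_le (r r' : tree (tree unit)) : Prop :=
  forall o phi, omod o (fsem phi) r -> omod o (fsem phi) r'.

Definition decomposable : Prop :=
  forall r r', curly_le r r' -> tri_le (mu r) (mu r').

Definition image {X Y : Type} (R : X -> Y -> Prop) (A : X -> Prop) : Y -> Prop :=
  fun y => exists x, A x /\ R x y.

Definition lift {X : Type} (R : X -> X -> Prop) (t t' : tree X) : Prop :=
  forall (A : X -> Prop) o, omod o A t -> omod o (image R A) t'.

Definition app_sim (Rv : ty -> val -> val -> Prop) (Rc : ty -> com -> com -> Prop)
  : Prop :=
  (forall t v w, Rv t v w -> tv [] v t /\ tv [] w t) /\
  (forall t m n, Rc t m n -> tc [] m t /\ tc [] n t) /\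
  (forall v w, Rv Nat v w -> v = w) /\
  (forall t m n, Rc t m n -> lift (Rv t) (optree m) (optree n)) /\
  (forall t' t v w, Rv (Arr t' t) v w ->
     forall u, tv [] u t' -> Rc t (CApp v u) (CApp w u)).

Definition symmetric_fam (Rv : ty -> val -> val -> Prop) (Rc : ty -> com -> com -> Prop)
  : Prop :=
  (forall t v w, Rv t v w -> Rv t w v) /\ (forall t m n, Rc t m n -> Rc t n m).

Definition bisim_v (t : ty) (v w : val) : Prop :=
  exists Rv Rc, app_sim Rv Rc /\ symmetric_fam Rv Rc /\ Rv t v w.
Definition bisim_c (t : ty) (m n : com) : Prop :=
  exists Rv Rc, app_sim Rv Rc /\ symmetric_fam Rv Rc /\ Rc t m n.

End Modalities.

Definition closed_inst (G : ctx) (g : nat -> val) : Prop :=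
  forall i t, nth_error G i = Some t -> tv [] (g i) t.

Definition open_v (R : ty -> val -> val -> Prop) (G : ctx) (t : ty) (v w : val) : Prop :=
  tv G v t /\ tv G w t /\
  forall g, closed_inst G g -> R t (subst_v g v) (subst_v g w).

Definition open_c (R : ty -> com -> com -> Prop) (G : ctx) (t : ty) (m n : com) : Prop :=
  tc G m t /\ tc G n t /\
  forall g, closed_inst G g -> R t (subst_c g m) (subst_c g n).

Definition compatible (Rv : ctx -> ty -> val -> val -> Prop)
                      (Rc : ctx -> ty -> com -> com -> Prop) : Prop :=
  (forall G i t, nth_error G i = Some t -> Rv G t (VVar i) (VVar i)) /\
  (forall G, Rv G One VUnit VUnit) /\
  (forall G, Rv G Nat VZ VZ) /\
  (forall G v w, Rv G Nat v w -> Rv G Nat (VS v) (VS w)) /\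
  (forall G t t' m n, Rc (t :: G) t' m n -> Rv G (Arr t t') (VLam t m) (VLam t n)) /\
  (forall G t t' v v' w w', Rv G (Arr t t') v v' -> Rv G t w w' ->
      Rc G t' (CApp v w) (CApp v' w')) /\
  (forall G t v w, Rv G t v w -> Rc G t (CRet v) (CRet w)) /\
  (forall G t t' m m' n n', Rc G t m m' -> Rc (t :: G) t' n n' ->
      Rc G t' (CLet m n) (CLet m' n')) /\
  (forall G r t v w, Rv G (Arr (Arr r t) (Arr r t)) v w ->
      Rc G (Arr r t) (CFix v) (CFix w)) /\
  (forall G t v w m m' n n', Rv G Nat v w -> Rc G t m m' -> Rc (Nat :: G) t n n' ->
      Rc G t (CCase v m n) (CCase w m' n')) /\
  (forall G t (s : Sg) n ms ms', arity_of s = AFin n -> length ms = n ->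
      Forall2 (Rc G t) ms ms' -> Rc G t (COpF s ms) (COpF s ms')) /\
  (forall G t (s : Sg) n v w ms ms', arity_of s = APFin n -> Rv G Nat v w ->
      length ms = n -> Forall2 (Rc G t) ms ms' ->
      Rc G t (COpPF s v ms) (COpPF s w ms')) /\
  (forall G t (s : Sg) v w, arity_of s = AInf -> Rv G (Arr Nat t) v w ->
      Rc G t (COpI s v) (COpI s w)) /\
  (forall G t (s : Sg) v v' w w', arity_of s = APInf -> Rv G Nat v v' ->
      Rv G (Arr Nat t) w w' -> Rc G t (COpPI s v w) (COpPI s v' w')).

End Language.

(* Main.v *)
Require Import Defs.
From Stdlib Require Import List Arith Lia FunctionalExtensionality Eqdep ClassicalEpsilon.
Import ListNotations.

#[global] Arguments Leaf {Sg X} _.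
#[global] Arguments Bot {Sg X}.

Set Implicit Arguments.

Section Syn.
Variable Sg : signature.
Local Notation val := (val Sg).
Local Notation com := (com Sg).

Section Ind.
Variables (Pv : val -> Prop) (Pc : com -> Prop).
Hypotheses
  (h_unit : Pv (VUnit Sg)) (h_z : Pv (VZ Sg)) (h_s : forall v, Pv v -> Pv (VS v))
  (h_lam : forall t m, Pc m -> Pv (VLam t m)) (h_var : forall n, Pv (VVar Sg n))
  (h_app : forall v w, Pv v -> Pv w -> Pc (CApp v w))
  (h_ret : forall v, Pv v -> Pc (CRet v))
  (h_let : forall m n, Pc m -> Pc n -> Pc (CLet m n))
  (h_fix : forall v, Pv v -> Pc (CFix v))
  (h_case : forall v m n, Pv v -> Pc m -> Pc n -> Pc (CCase v m n))
  (h_opF : forall s ms, Forall Pc ms -> Pc (COpF s ms))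
  (h_opPF : forall s v ms, Pv v -> Forall Pc ms -> Pc (COpPF s v ms))
  (h_opI : forall s v, Pv v -> Pc (COpI s v))
  (h_opPI : forall s v w, Pv v -> Pv w -> Pc (COpPI s v w)).

Fixpoint vind (v : val) : Pv v
with cind (m : com) : Pc m.
Proof.
  - destruct v.
    + apply h_unit.
    + apply h_z.
    + apply h_s; apply vind.
    + apply h_lam; apply cind.
    + apply h_var.
  - destruct m.
    + apply h_app; apply vind.
    + apply h_ret; apply vind.
    + apply h_let; apply cind.
    + apply h_fix; apply vind.
    + apply h_case; [apply vind|apply cind|apply cind].
    + apply h_opF. induction l; constructor; [apply cind|assumption].
    + apply h_opPF; [apply vind|]. induction l; constructor; [apply cind|assumption].
    + apply h_opI; apply vind.
    + apply h_opPI; apply vind.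
Defined.

Lemma syn_ind : (forall v, Pv v) /\ (forall m, Pc m).
Proof. split; [exact vind | exact cind]. Qed.
End Ind.

Lemma Forall_map_eq {A B} (f g : A -> B) l :
  Forall (fun x => f x = g x) l -> map f l = map g l.
Proof. induction 1; simpl; f_equal; auto. Qed.

Ltac fe := apply functional_extensionality; intros [|k]; simpl; auto.

Lemma ren_ren :
  (forall (v : val) f f', ren_v f (ren_v f' v) = ren_v (fun i => f (f' i)) v) /\
  (forall (m : com) f f', ren_c f (ren_c f' m) = ren_c (fun i => f (f' i)) m).
Proof.
  apply syn_ind; intros; simpl; f_equal; auto;
  try (rewrite H; f_equal; fe);
  try (rewrite H0; f_equal; fe);
  try (rewrite H1; f_equal; fe);
  try (rewrite map_map; apply Forall_map_eq; eapply Forall_impl; [|eassumption]; simpl; auto).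
Qed.

Lemma subst_ren :
  (forall (v : val) g f, subst_v g (ren_v f v) = subst_v (fun i => g (f i)) v) /\
  (forall (m : com) g f, subst_c g (ren_c f m) = subst_c (fun i => g (f i)) m).
Proof.
  apply syn_ind; intros; simpl; f_equal; auto;
  try (rewrite H; f_equal; fe);
  try (rewrite H0; f_equal; fe);
  try (rewrite H1; f_equal; fe);
  try (rewrite map_map; apply Forall_map_eq; eapply Forall_impl; [|eassumption]; simpl; auto).
Qed.

Lemma ren_subst :
  (forall (v : val) g f, ren_v f (subst_v g v) = subst_v (fun i => ren_v f (g i)) v) /\
  (forall (m : com) g f, ren_c f (subst_c g m) = subst_c (fun i => ren_v f (g i)) m).
Proof.
  apply syn_ind; intros; simpl; f_equal; auto;
  try (rewrite H; f_equal; fe; rewrite (proj1 ren_ren), (proj1 ren_ren); reflexivity);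
  try (rewrite H0; f_equal; fe; rewrite (proj1 ren_ren), (proj1 ren_ren); reflexivity);
  try (rewrite H1; f_equal; fe; rewrite (proj1 ren_ren), (proj1 ren_ren); reflexivity);
  try (rewrite map_map; apply Forall_map_eq; eapply Forall_impl; [|eassumption]; simpl; auto).
Qed.

Lemma subst_subst :
  (forall (v : val) g g', subst_v g' (subst_v g v) = subst_v (fun i => subst_v g' (g i)) v) /\
  (forall (m : com) g g', subst_c g' (subst_c g m) = subst_c (fun i => subst_v g' (g i)) m).
Proof.
  apply syn_ind; intros; simpl; f_equal; auto;
  try (rewrite H; f_equal; fe; rewrite (proj1 subst_ren), (proj1 ren_subst); reflexivity);
  try (rewrite H0; f_equal; fe; rewrite (proj1 subst_ren), (proj1 ren_subst); reflexivity);
  try (rewrite H1; f_equal; fe; rewrite (proj1 subst_ren), (proj1 ren_subst); reflexivity);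
  try (rewrite map_map; apply Forall_map_eq; eapply Forall_impl; [|eassumption]; simpl; auto).
Qed.

Lemma ren_as_subst :
  (forall (v : val) f, ren_v f v = subst_v (fun i => VVar Sg (f i)) v) /\
  (forall (m : com) f, ren_c f m = subst_c (fun i => VVar Sg (f i)) m).
Proof.
  apply syn_ind; intros; simpl; f_equal; auto;
  try (rewrite H; f_equal; fe);
  try (rewrite H0; f_equal; fe);
  try (rewrite H1; f_equal; fe);
  try (apply Forall_map_eq; eapply Forall_impl; [|eassumption]; simpl; auto).
Qed.

Lemma subst_id :
  (forall v, subst_v (VVar Sg) v = v) /\ (forall m, subst_c (VVar Sg) m = m).
Proof.
  apply syn_ind; intros; simpl; f_equal; auto;
  try (replace (ups (VVar Sg)) with (VVar Sg) by fe; auto);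
  try (rewrite <- (map_id ms) at 2; apply Forall_map_eq; auto).
Qed.

Scheme tv_min := Minimality for tv Sort Prop
with tc_min := Minimality for tc Sort Prop.

Combined Scheme tvc_ind from tv_min, tc_min.

Definition ctx_ren (G D : ctx) (f : nat -> nat) :=
  forall i t, nth_error G i = Some t -> nth_error D (f i) = Some t.

Lemma ctx_ren_up G D f t : ctx_ren G D f -> ctx_ren (t :: G) (t :: D) (upr f).
Proof. intros H [|i] u; simpl; auto. Qed.

Lemma typing_ren :
  (forall G (v : val) t, tv G v t -> forall D f, ctx_ren G D f -> tv D (ren_v f v) t) /\
  (forall G (m : com) t, tc G m t -> forall D f, ctx_ren G D f -> tc D (ren_c f m) t).
Proof.
  apply tvc_ind; intros; simpl; try (econstructor; eauto using ctx_ren_up; fail).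
  - econstructor; eauto. rewrite length_map; auto.
    intros m' Hm. apply in_map_iff in Hm. destruct Hm as [m0 [<- Hm0]]. eauto.
  - econstructor; eauto. rewrite length_map; auto.
    intros m' Hm. apply in_map_iff in Hm. destruct Hm as [m0 [<- Hm0]]. eauto.
Qed.

Definition ctx_sub (G D : ctx) (g : nat -> val) :=
  forall i t, nth_error G i = Some t -> tv D (g i) t.

Lemma ctx_sub_up G D g t : ctx_sub G D g -> ctx_sub (t :: G) (t :: D) (ups g).
Proof.
  intros H [|i] u; simpl; intros E.
  - inversion E; subst. constructor. reflexivity.
  - eapply (proj1 typing_ren); eauto. intros j w Ej. simpl. auto.
Qed.

Lemma typing_subst :
  (forall G (v : val) t, tv G v t -> forall D g, ctx_sub G D g -> tv D (subst_v g v) t) /\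
  (forall G (m : com) t, tc G m t -> forall D g, ctx_sub G D g -> tc D (subst_c g m) t).
Proof.
  apply tvc_ind; intros; simpl; try (econstructor; eauto using ctx_sub_up; fail).
  - eauto.
  - econstructor; eauto. rewrite length_map; auto.
    intros m' Hm. apply in_map_iff in Hm. destruct Hm as [m0 [<- Hm0]]. eauto.
  - econstructor; eauto. rewrite length_map; auto.
    intros m' Hm. apply in_map_iff in Hm. destruct Hm as [m0 [<- Hm0]]. eauto.
Qed.

Lemma nth_error_lt_len (G : ctx) i t : nth_error G i = Some t -> i < length G.
Proof. intros E. apply nth_error_Some. congruence. Qed.

Lemma subst_agree :
  (forall G (v : val) t, tv G v t -> forall g g', (forall i, i < length G -> g i = g' i) ->
     subst_v g v = subst_v g' v) /\
  (forall G (m : com) t, tc G m t -> forall g g', (forall i, i < length G -> g i = g' i) ->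
     subst_c g m = subst_c g' m).
Proof.
  assert (Hup : forall (G : ctx) t (g g' : nat -> val), (forall i, i < length G -> g i = g' i) ->
     forall i, i < length (t :: G) -> ups g i = ups g' i).
  { intros G t g g' H [|i] Hi; simpl; auto. simpl in Hi. rewrite H; auto; lia. }
  apply tvc_ind; intros; simpl; f_equal; eauto using nth_error_lt_len.
  - apply map_ext_in. intros; eauto.
  - apply map_ext_in. intros; eauto.
Qed.

Lemma closed_subst_v (v : val) t g : tv [] v t -> subst_v g v = v.
Proof.
  intros H. rewrite <- (proj1 subst_id v) at 2.
  eapply (proj1 subst_agree); eauto. simpl; intros; lia.
Qed.

Lemma closed_subst_c (m : com) t g : tc [] m t -> subst_c g m = m.
Proof.
  intros H. rewrite <- (proj2 subst_id m) at 2.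
  eapply (proj2 subst_agree); eauto. simpl; intros; lia.
Qed.

Lemma closed_ren_v (v : val) t f : tv [] v t -> ren_v f v = v.
Proof. intros H. rewrite (proj1 ren_as_subst). eapply closed_subst_v; eauto. Qed.

Lemma closed_ren_c (m : com) t f : tc [] m t -> ren_c f m = m.
Proof. intros H. rewrite (proj2 ren_as_subst). eapply closed_subst_c; eauto. Qed.

Definition scons2 (u : val) (g : nat -> val) : nat -> val :=
  fun n => match n with 0 => u | S k => g k end.

Lemma subst1_ups (m : com) g u : subst1 (subst_c (ups g) m) u = subst_c (scons2 u g) m.
Proof.
  unfold subst1. rewrite (proj2 subst_subst). f_equal.
  apply functional_extensionality; intros [|k]; simpl; auto.
  rewrite (proj1 subst_ren). simpl. apply (proj1 subst_id).
Qed.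

Lemma subst1_as (m : com) u : subst1 m u = subst_c (scons2 u (VVar Sg)) m.
Proof. unfold subst1. f_equal; try (apply functional_extensionality; intros [|k]; reflexivity). Qed.

Lemma typing_subst1 (m : com) u t t' : tc [t] m t' -> tv [] u t -> tc [] (subst1 m u) t'.
Proof.
  intros Hm Hu. eapply (proj2 typing_subst); eauto.
  intros [|i] w E; simpl in *. inversion E; subst; auto. destruct i; discriminate.
Qed.

Lemma numeral_typed G n : tv G (numeral Sg n) Nat.
Proof. induction n; simpl; constructor; auto. Qed.

End Syn.

Section Trees.
Variable Sg : signature.
Local Notation tree := (tree Sg).

Definition tfrob {X} (t : tree X) : tree X :=
  match t with Bot => Bot | Leaf x => Leaf x | Node s p k => Node s p k end.
Lemma tfrob_eq {X} (t : tree X) : t = tfrob t.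
Proof. destruct t; reflexivity. Qed.

CoFixpoint tmap {X Y} (f : X -> Y) (t : tree X) : tree Y :=
  match t with
  | Bot => Bot
  | Leaf x => Leaf (f x)
  | Node s p k => Node s p (fun i => tmap f (k i))
  end.

Definition bind {X Y} (t : tree X) (f : X -> tree Y) : tree Y := mu (tmap f t).

Lemma tmap_bot {X Y} (f : X -> Y) : tmap f (Bot) = Bot.
Proof. rewrite (tfrob_eq (tmap _ _)); reflexivity. Qed.
Lemma tmap_leaf {X Y} (f : X -> Y) x : tmap f (Leaf x) = Leaf (f x).
Proof. rewrite (tfrob_eq (tmap _ _)); reflexivity. Qed.
Lemma tmap_node {X Y} (f : X -> Y) (s : Sg) p k :
  tmap f (Node s p k) = Node s p (fun i => tmap f (k i)).
Proof. rewrite (tfrob_eq (tmap _ _)); reflexivity. Qed.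
Lemma mu_bot {X} : mu (@Bot Sg (tree X)) = Bot.
Proof. rewrite (tfrob_eq (mu _)); reflexivity. Qed.
Lemma mu_leaf {X} (t : tree X) : mu (Leaf t) = t.
Proof. rewrite (tfrob_eq (mu _)); simpl. symmetry; apply tfrob_eq. Qed.
Lemma mu_node {X} (s : Sg) p (k : _ -> tree (tree X)) :
  mu (Node s p k) = Node s p (fun i => mu (k i)).
Proof. rewrite (tfrob_eq (mu _)); reflexivity. Qed.
Lemma restrict_bot {X} (P : X -> Prop) : restrict P (@Bot Sg X) = Bot.
Proof. rewrite (tfrob_eq (restrict _ _)); reflexivity. Qed.
Lemma restrict_leaf {X} (P : X -> Prop) x :
  restrict P (@Leaf Sg X x) = if excluded_middle_informative (P x) then Leaf tt else Bot.
Proof. rewrite (tfrob_eq (restrict _ _)); simpl. destruct excluded_middle_informative; reflexivity. Qed.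
Lemma restrict_node {X} (P : X -> Prop) (s : Sg) p k :
  restrict P (Node s p k) = Node s p (fun i => restrict P (k i)).
Proof. rewrite (tfrob_eq (restrict _ _)); reflexivity. Qed.
Lemma bind_bot {X Y} (f : X -> tree Y) : bind (@Bot Sg X) f = Bot.
Proof. unfold bind. rewrite tmap_bot, mu_bot. reflexivity. Qed.
Lemma bind_leaf {X Y} (f : X -> tree Y) x : bind (Leaf x) f = f x.
Proof. unfold bind. rewrite tmap_leaf, mu_leaf. reflexivity. Qed.
Lemma bind_node {X Y} (f : X -> tree Y) (s : Sg) p k :
  bind (Node s p k) f = Node s p (fun i => bind (k i) f).
Proof. unfold bind. rewrite tmap_node, mu_node. reflexivity. Qed.

Definition tle_step {X} (S : tree X -> tree X -> Prop) (t t' : tree X) : Prop :=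
  match t with
  | Bot => True
  | Leaf x => t' = Leaf x
  | Node s p k => exists k', t' = Node s p k' /\ forall i, S (k i) (k' i) \/ tle (k i) (k' i)
  end.

Lemma tle_coind {X} (S : tree X -> tree X -> Prop) :
  (forall t t', S t t' -> tle_step S t t') -> forall t t', S t t' -> tle t t'.
Proof.
  intros H. cofix CH. intros t t' Hs. specialize (H _ _ Hs) as Hst.
  destruct t as [|x|s p k]; simpl in Hst.
  - constructor.
  - subst. constructor.
  - destruct Hst as [k' [E Hk]]. subst t'. constructor. intros i.
    destruct (Hk i) as [Hi|Hi]; [apply CH; exact Hi | exact Hi].
Qed.

Lemma tle_leaf_inv {X} (x : X) (t' : tree X) : tle (Leaf x) t' -> t' = Leaf x.
Proof. intros H. inversion H; reflexivity. Qed.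

Lemma tle_node_inv {X} (s : Sg) p (k : _ -> tree X) t' : tle (Node s p k) t' ->
  exists k', t' = Node s p k' /\ forall i, tle (k i) (k' i).
Proof.
  intros H. inversion H; subst;
  repeat match goal with HH : existT _ _ _ = existT _ _ _ |- _ => apply inj_pair2 in HH end;
  subst; eauto.
Qed.

Lemma tle_refl {X} (t : tree X) : tle t t.
Proof.
  apply (tle_coind (fun a b => a = b)); [|reflexivity].
  intros a b <-. destruct a; simpl; eauto.
Qed.

Lemma tle_trans {X} (a b c : tree X) : tle a b -> tle b c -> tle a c.
Proof.
  intros H1 H2. apply (tle_coind (fun a c => exists b, tle a b /\ tle b c)); [|eauto].
  clear. intros a c [b [H1 H2]]. destruct a as [|x|s p k]; simpl; auto.
  - apply tle_leaf_inv in H1; subst. apply tle_leaf_inv in H2; auto.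
  - apply tle_node_inv in H1 as [k1 [-> Hk1]]. apply tle_node_inv in H2 as [k2 [-> Hk2]].
    exists k2; split; auto. intros i; left; eauto.
Qed.

Lemma tle_eq {X} (a b : tree X) : a = b -> tle a b.
Proof. intros ->; apply tle_refl. Qed.

CoInductive trel {X Y} (Q : X -> Y -> Prop) : tree X -> tree Y -> Prop :=
| trel_bot t : trel Q (Bot) t
| trel_leaf x y : Q x y -> trel Q (Leaf x) (Leaf y)
| trel_node s p k k' : (forall i, trel Q (k i) (k' i)) -> trel Q (Node s p k) (Node s p k').

Lemma trel_node_inv {X Y} (Q : X -> Y -> Prop) (s : Sg) p k t' : trel Q (Node s p k) t' ->
  exists k', t' = Node s p k' /\ forall i, trel Q (k i) (k' i).
Proof.
  intros H. inversion H; subst;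
  repeat match goal with HH : existT _ _ _ = existT _ _ _ |- _ => apply inj_pair2 in HH end;
  subst; eauto.
Qed.

Lemma trel_leaf_inv {X Y} (Q : X -> Y -> Prop) x (t' : tree Y) : trel Q (Leaf x) t' ->
  exists y, t' = Leaf y /\ Q x y.
Proof. intros H. inversion H; subst; eauto. Qed.

Lemma trel_restrict {X Y} (Q : X -> Y -> Prop) (A : X -> Prop) (B : Y -> Prop) (t : tree X) (t' : tree Y) :
  (forall x y, Q x y -> A x -> B y) -> trel Q t t' -> tle (restrict A t) (restrict B t').
Proof.
  intros HQ H.
  apply (tle_coind (fun a b => exists t t', trel Q t t' /\ a = restrict A t /\ b = restrict B t'));
  [|eauto].
  clear t t' H. intros a b [t [t' [H [-> ->]]]].
  destruct H as [t0| x y Hxy | s p k k' Hk].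
  - rewrite restrict_bot; simpl; auto.
  - rewrite !restrict_leaf. destruct excluded_middle_informative; simpl; auto.
    destruct excluded_middle_informative; simpl; auto. exfalso; eauto.
  - rewrite !restrict_node. simpl. eexists; split; [reflexivity|]. intros i; left; eauto.
Qed.

Lemma trel_mono {X Y} (Q Q' : X -> Y -> Prop) (t : tree X) (t' : tree Y) :
  (forall x y, Q x y -> Q' x y) -> trel Q t t' -> trel Q' t t'.
Proof.
  intros HQ. revert t t'. cofix CH. intros t t' H. destruct H.
  - constructor.
  - constructor; auto.
  - constructor. intros i; apply CH; auto.
Qed.

Lemma tle_restrict {X} (P : X -> Prop) (t t' : tree X) : tle t t' -> tle (restrict P t) (restrict P t').
Proof.
  intros H.
  apply (tle_coind (fun a b => exists t t', tle t t' /\ a = restrict P t /\ b = restrict P t'));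
  [|eauto].
  clear t t' H. intros a b [t [t' [H [-> ->]]]].
  destruct H as [t0| x | s p k k' Hk].
  - rewrite restrict_bot; simpl; auto.
  - rewrite !restrict_leaf. destruct excluded_middle_informative; simpl; auto.
  - rewrite !restrict_node. simpl. eexists; split; [reflexivity|]. intros i; left; eauto.
Qed.

Lemma restrict_monoP {X} (P P' : X -> Prop) (t : tree X) :
  (forall x, P x -> P' x) -> tle (restrict P t) (restrict P' t).
Proof.
  intros H. eapply trel_restrict with (Q := eq); [intros; subst; eauto|].
  revert t. cofix CH. intros [|x|s p k]; constructor; auto.
Qed.

Lemma trel_eq_refl {X} (t : tree X) : trel eq t t.
Proof. revert t. cofix CH. intros [|x|s p k]; constructor; auto. Qed.

Lemma restrict_extP {X} (P P' : X -> Prop) (t : tree X) :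
  (forall x, P x <-> P' x) -> tle (restrict P t) (restrict P' t).
Proof. intros H; apply restrict_monoP; firstorder. Qed.

Lemma restrict_restrict1 {X} (P : X -> Prop) (Q : unit -> Prop) (t : tree X) :
  tle (restrict Q (restrict P t)) (restrict (fun x => P x /\ Q tt) t).
Proof.
  apply (tle_coind (fun a b => exists t, a = restrict Q (restrict P t) /\
                                         b = restrict (fun x => P x /\ Q tt) t)); [|eauto].
  intros a b [t0 [-> ->]]. destruct t0 as [|x|s p k].
  - rewrite !restrict_bot; simpl; auto.
  - rewrite !restrict_leaf. destruct (excluded_middle_informative (P x)).
    + rewrite restrict_leaf. destruct (excluded_middle_informative (Q tt));
      destruct (excluded_middle_informative (P x /\ Q tt)); simpl; tauto.
    + rewrite restrict_bot. simpl; auto.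
  - rewrite !restrict_node. simpl. eexists; split; [reflexivity|]. eauto.
Qed.

Lemma restrict_restrict2 {X} (P : X -> Prop) (Q : unit -> Prop) (t : tree X) :
  tle (restrict (fun x => P x /\ Q tt) t) (restrict Q (restrict P t)).
Proof.
  apply (tle_coind (fun b a => exists t, a = restrict Q (restrict P t) /\
                                         b = restrict (fun x => P x /\ Q tt) t)); [|eauto].
  intros b a [t0 [-> ->]]. destruct t0 as [|x|s p k].
  - rewrite !restrict_bot; simpl; auto.
  - rewrite !restrict_leaf. destruct (excluded_middle_informative (P x /\ Q tt)); simpl; auto.
    destruct excluded_middle_informative; [|tauto]. rewrite restrict_leaf.
    destruct excluded_middle_informative; [reflexivity|tauto].
  - rewrite !restrict_node. simpl. eexists; split; [reflexivity|]. eauto.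
Qed.

Lemma restrict_True1 (t : tree unit) : tle t (restrict (fun _ => True) t).
Proof.
  apply (tle_coind (fun a b => b = restrict (fun _ => True) a)); [|reflexivity].
  intros a b ->. destruct a as [|[]|s p k].
  - simpl; auto.
  - rewrite restrict_leaf. destruct excluded_middle_informative; [reflexivity|tauto].
  - rewrite restrict_node. simpl. eexists; split; [reflexivity|]. eauto.
Qed.

Lemma restrict_True2 (t : tree unit) : tle (restrict (fun _ => True) t) t.
Proof.
  apply (tle_coind (fun b a => b = restrict (fun _ => True) a)); [|reflexivity].
  intros b a ->. destruct a as [|[]|s p k].
  - rewrite restrict_bot; simpl; auto.
  - rewrite restrict_leaf. destruct excluded_middle_informative; [reflexivity|tauto].
  - rewrite restrict_node. simpl. eexists; split; [reflexivity|]. eauto.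
Qed.

Lemma restrict_map1 {X Y} (P : Y -> Prop) (f : X -> Y) (t : tree X) :
  tle (restrict P (tmap f t)) (restrict (fun x => P (f x)) t).
Proof.
  apply (tle_coind (fun a b => exists t, a = restrict P (tmap f t) /\
                                         b = restrict (fun x => P (f x)) t)); [|eauto].
  intros a b [t0 [-> ->]]. destruct t0 as [|x|s p k].
  - rewrite tmap_bot, !restrict_bot; simpl; auto.
  - rewrite tmap_leaf, !restrict_leaf. destruct excluded_middle_informative; simpl; auto.
  - rewrite tmap_node, !restrict_node. simpl. eexists; split; [reflexivity|]. eauto.
Qed.

Lemma restrict_map2 {X Y} (P : Y -> Prop) (f : X -> Y) (t : tree X) :
  tle (restrict (fun x => P (f x)) t) (restrict P (tmap f t)).
Proof.
  apply (tle_coind (fun b a => exists t, a = restrict P (tmap f t) /\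
                                         b = restrict (fun x => P (f x)) t)); [|eauto].
  intros b a [t0 [-> ->]]. destruct t0 as [|x|s p k].
  - rewrite !restrict_bot; simpl; auto.
  - rewrite tmap_leaf, !restrict_leaf. destruct excluded_middle_informative; simpl; auto.
  - rewrite tmap_node, !restrict_node. simpl. eexists; split; [reflexivity|]. eauto.
Qed.

Lemma restrict_mu1 {X} (P : X -> Prop) (r : tree (tree X)) :
  tle (restrict P (mu r)) (mu (tmap (restrict P) r)).
Proof.
  apply (tle_coind (fun a b => (exists r, a = restrict P (mu r) /\ b = mu (tmap (restrict P) r))));
  [|eauto].
  intros a b [r0 [-> ->]]. destruct r0 as [|t|s p k].
  - rewrite mu_bot, restrict_bot; simpl; auto.
  - rewrite tmap_leaf, !mu_leaf.
    destruct t as [|x|s p k].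
    + rewrite restrict_bot; simpl; auto.
    + rewrite restrict_leaf. destruct excluded_middle_informative; simpl; auto.
    + rewrite restrict_node; simpl. eexists; split; [reflexivity|]. intros; right; apply tle_refl.
  - rewrite mu_node, tmap_node, mu_node, restrict_node. simpl.
    eexists; split; [reflexivity|]. eauto.
Qed.

Lemma restrict_mu2 {X} (P : X -> Prop) (r : tree (tree X)) :
  tle (mu (tmap (restrict P) r)) (restrict P (mu r)).
Proof.
  apply (tle_coind (fun b a => (exists r, a = restrict P (mu r) /\ b = mu (tmap (restrict P) r))));
  [|eauto].
  intros b a [r0 [-> ->]]. destruct r0 as [|t|s p k].
  - rewrite tmap_bot, mu_bot; simpl; auto.
  - rewrite tmap_leaf, !mu_leaf.
    destruct t as [|x|s p k].
    + rewrite restrict_bot; simpl; auto.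
    + rewrite restrict_leaf. destruct excluded_middle_informative; simpl; auto.
    + rewrite restrict_node; simpl. eexists; split; [reflexivity|]. intros; right; apply tle_refl.
  - rewrite mu_node, tmap_node, mu_node, restrict_node. simpl.
    eexists; split; [reflexivity|]. eauto.
Qed.

Lemma bind_mono {X Y} (t t' : tree X) (f g : X -> tree Y) :
  tle t t' -> (forall x, tle (f x) (g x)) -> tle (bind t f) (bind t' g).
Proof.
  intros Ht Hfg.
  apply (tle_coind (fun a b => exists t t', tle t t' /\ a = bind t f /\ b = bind t' g)); [|eauto].
  clear t t' Ht. intros a b [t [t' [H [-> ->]]]].
  destruct H as [t0| x | s p k k' Hk].
  - rewrite bind_bot; simpl; auto.
  - rewrite !bind_leaf. specialize (Hfg x).
    destruct (f x) as [|y|s p k]; simpl; auto.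
    + apply tle_leaf_inv in Hfg; auto.
    + apply tle_node_inv in Hfg as [k' [E Hk]]. eauto.
  - rewrite !bind_node. simpl. eexists; split; [reflexivity|]. intros i; left; eauto.
Qed.

Lemma trel_bind {X Y X' Y'} (Q : X -> Y -> Prop) (Q' : X' -> Y' -> Prop) (t : tree X) (t' : tree Y) (f : X -> tree X') (g : Y -> tree Y') :
  trel Q t t' -> (forall x y, Q x y -> trel Q' (f x) (g y)) -> trel Q' (bind t f) (bind t' g).
Proof.
  intros Ht Hfg. revert t t' Ht. cofix CH. intros t t' Ht.
  destruct Ht as [t0| x y Hxy | s p k k' Hk].
  - rewrite bind_bot. constructor.
  - rewrite !bind_leaf. auto.
  - rewrite !bind_node. constructor. intros i. apply CH. auto.
Qed.

Lemma mu_leaves {X} (s : Sg) p (k : _ -> tree X) :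
  mu (Node s p (fun i => Leaf (k i))) = Node s p k.
Proof.
  rewrite mu_node. f_equal. apply functional_extensionality; intros i. apply mu_leaf.
Qed.

End Trees.

Section Op.
Variable Sg : signature.
Local Notation val := (val Sg).
Local Notation com := (com Sg).
Local Notation tree := (tree Sg).
Local Notation config := (config Sg).

Definition shape (f : config -> tree val) (cf : config) : tree val :=
  let (stk, m) := cf in
      match m with
      | CRet v => Leaf v
      | COpF s ms =>
          match arity_of s as a return (arity_of s = a -> tree val) with
          | AFin n => fun e =>
              Node s (eq_rect_r par (tt : par (AFin n)) e)
                (fun i => f
                   (stk, nth (proj1_sig (eq_rect _ chi i _ e : chi (AFin n))) ms (dflt Sg)))
          | _ => fun _ => Bot
          end eq_refl
      | COpPF s v ms =>
          match num_of v with
          | None => Bot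
          | Some p =>
          match arity_of s as a return (arity_of s = a -> tree val) with
          | APFin n => fun e =>
              Node s (eq_rect_r par (p : par (APFin n)) e)
                (fun i => f
                   (stk, nth (proj1_sig (eq_rect _ chi i _ e : chi (APFin n))) ms (dflt Sg)))
          | _ => fun _ => Bot
          end eq_refl
          end
      | COpI s v =>
          match arity_of s as a return (arity_of s = a -> tree val) with
          | AInf => fun e =>
              Node s (eq_rect_r par (tt : par AInf) e)
                (fun i => f
                   (stk, CApp v (numeral Sg (eq_rect _ chi i _ e : chi AInf))))
          | _ => fun _ => Bot
          end eq_refl
      | COpPI s v w =>
          match num_of v with
          | None => Bot
          | Some p =>
          match arity_of s as a return (arity_of s = a -> tree val) with
          | APInf => fun e =>
              Node s (eq_rect_r par (p : par APInf) e)
                (fun i => f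
                   (stk, CApp w (numeral Sg (eq_rect _ chi i _ e : chi APInf))))
          | _ => fun _ => Bot
          end eq_refl
          end
      | _ => Bot
      end.

Definition optree_body (c : config) : tree val :=
  match excluded_middle_informative (exists k, run k c <> None) with
  | right _ => Bot
  | left H =>
    match run (proj1_sig (constructive_indefinite_description _ H)) c with
    | None => Bot
    | Some cf => shape (@optree_cfg Sg) cf
    end
  end.

Lemma optree_unfold c : optree_cfg c = optree_body c.
Proof.
  rewrite (tfrob_eq (optree_cfg c)), (tfrob_eq (optree_body c)). reflexivity.
Qed.

Definition shF (f : config -> tree val) stk (s : Sg) ms a (e : arity_of s = a) : tree val :=
  match a as a0 return (arity_of s = a0 -> tree val) with
  | AFin n => fun e => Node s (eq_rect_r par (tt : par (AFin n)) e)
       (fun i => f (stk, nth (proj1_sig (eq_rect _ chi i _ e : chi (AFin n))) ms (dflt Sg)))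
  | _ => fun _ => Bot end e.

Definition shPF (f : config -> tree val) stk (s : Sg) (p : nat) ms a (e : arity_of s = a) : tree val :=
  match a as a0 return (arity_of s = a0 -> tree val) with
  | APFin n => fun e => Node s (eq_rect_r par (p : par (APFin n)) e)
       (fun i => f (stk, nth (proj1_sig (eq_rect _ chi i _ e : chi (APFin n))) ms (dflt Sg)))
  | _ => fun _ => Bot end e.

Definition shI (f : config -> tree val) stk (s : Sg) v a (e : arity_of s = a) : tree val :=
  match a as a0 return (arity_of s = a0 -> tree val) with
  | AInf => fun e => Node s (eq_rect_r par (tt : par AInf) e)
       (fun i => f (stk, CApp v (numeral Sg (eq_rect _ chi i _ e : chi AInf))))
  | _ => fun _ => Bot end e.

Definition shPI (f : config -> tree val) stk (s : Sg) (p : nat) w a (e : arity_of s = a) : tree val :=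
  match a as a0 return (arity_of s = a0 -> tree val) with
  | APInf => fun e => Node s (eq_rect_r par (p : par APInf) e)
       (fun i => f (stk, CApp w (numeral Sg (eq_rect _ chi i _ e : chi APInf))))
  | _ => fun _ => Bot end e.

Lemma shape_opF f stk s ms : shape f (stk, COpF s ms) = shF f stk s ms eq_refl.
Proof. reflexivity. Qed.
Lemma shape_opPF f stk s v ms : shape f (stk, COpPF s v ms) =
  match num_of v with None => Bot | Some p => shPF f stk s p ms eq_refl end.
Proof. reflexivity. Qed.
Lemma shape_opI f stk s v : shape f (stk, COpI s v) = shI f stk s v eq_refl.
Proof. reflexivity. Qed.
Lemma shape_opPI f stk s v w : shape f (stk, COpPI s v w) =
  match num_of v with None => Bot | Some p => shPI f stk s p w eq_refl end.
Proof. reflexivity. Qed.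
Lemma shape_ret f stk v : shape f (stk, CRet v) = Leaf v.
Proof. reflexivity. Qed.

Lemma shF_cases s a (e : arity_of s = a) :
  (forall f stk ms, shF f stk s ms e = Bot) \/
  exists n p (idx : chi (arity_of s) -> nat), a = AFin n /\ (forall i, idx i < n) /\
    forall f stk ms, shF f stk s ms e = Node s p (fun i => f (stk, nth (idx i) ms (dflt Sg))).
Proof.
  destruct a; try (left; reflexivity).
  right. exists n, (eq_rect_r par (tt : par (AFin n)) e), (fun i => proj1_sig (eq_rect _ chi i _ e)).
  split; [reflexivity|split; [intros i; apply proj2_sig|reflexivity]].
Qed.

Lemma shPF_cases s p a (e : arity_of s = a) :
  (forall f stk ms, shPF f stk s p ms e = Bot) \/
  exists n p' (idx : chi (arity_of s) -> nat), a = APFin n /\ (forall i, idx i < n) /\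
    forall f stk ms, shPF f stk s p ms e = Node s p' (fun i => f (stk, nth (idx i) ms (dflt Sg))).
Proof.
  destruct a; try (left; reflexivity).
  right. exists n, (eq_rect_r par (p : par (APFin n)) e), (fun i => proj1_sig (eq_rect _ chi i _ e)).
  split; [reflexivity|split; [intros i; apply proj2_sig|reflexivity]].
Qed.

Lemma shI_cases s a (e : arity_of s = a) :
  (forall f stk v, shI f stk s v e = Bot) \/
  exists p (idx : chi (arity_of s) -> nat), a = AInf /\
    forall f stk v, shI f stk s v e = Node s p (fun i => f (stk, CApp v (numeral Sg (idx i)))).
Proof.
  destruct a; try (left; reflexivity).
  right. exists (eq_rect_r par (tt : par AInf) e), (fun i => eq_rect _ chi i _ e : chi AInf).
  split; reflexivity.
Qed.

Lemma shPI_cases s p a (e : arity_of s = a) :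
  (forall f stk w, shPI f stk s p w e = Bot) \/
  exists p' (idx : chi (arity_of s) -> nat), a = APInf /\
    forall f stk w, shPI f stk s p w e = Node s p' (fun i => f (stk, CApp w (numeral Sg (idx i)))).
Proof.
  destruct a; try (left; reflexivity).
  right. exists (eq_rect_r par (p : par APInf) e), (fun i => eq_rect _ chi i _ e : chi APInf).
  split; reflexivity.
Qed.

Lemma shape_cases (m : com) :
  (forall f stk, shape f (stk, m) = Bot) \/ (exists v, m = CRet v) \/
  exists (s : Sg) p (ch : chi (arity_of s) -> com),
    (forall f stk, shape f (stk, m) = Node s p (fun i => f (stk, ch i))) /\
    (forall sigma, tc [] m sigma -> forall i, tc [] (ch i) sigma).
Proof.
  destruct m as [v w|v|m n|v|v m n|s l|s v l|s v|s v v0]; try (left; reflexivity).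
  - right; left; eauto.
  - destruct (shF_cases s (eq_refl (arity_of s))) as [H|[n [p [idx [E [Hi H]]]]]].
    + left; intros; rewrite shape_opF; auto.
    + right; right. exists s, p, (fun i => nth (idx i) l (dflt Sg)). split.
      * intros; rewrite shape_opF; auto.
      * intros sigma Ht i. inversion Ht; subst.
        match goal with HH : forall m, In m _ -> tc _ m _ |- _ => apply HH end. apply nth_In.
        match goal with HH : arity_of s = _ |- _ => rewrite E in HH; injection HH; intros; subst end.
        auto.
  - destruct (num_of v) as [p|] eqn:Ev; [|left; intros; rewrite shape_opPF, Ev; auto].
    destruct (shPF_cases s p (eq_refl (arity_of s))) as [H|[n [p' [idx [E [Hi H]]]]]].
    + left; intros; rewrite shape_opPF, Ev; auto.
    + right; right. exists s, p', (fun i => nth (idx i) l (dflt Sg)). split.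
      * intros; rewrite shape_opPF, Ev; auto.
      * intros sigma Ht i. inversion Ht; subst.
        match goal with HH : forall m, In m _ -> tc _ m _ |- _ => apply HH end. apply nth_In.
        match goal with HH : arity_of s = _ |- _ => rewrite E in HH; injection HH; intros; subst end.
        auto.
  - destruct (shI_cases s (eq_refl (arity_of s))) as [H|[p [idx [E H]]]].
    + left; intros; rewrite shape_opI; auto.
    + right; right. exists s, p, (fun i => CApp v (numeral Sg (idx i))). split.
      * intros; rewrite shape_opI; auto.
      * intros sigma Ht i. inversion Ht; subst. econstructor; eauto. apply numeral_typed.
  - destruct (num_of v) as [p|] eqn:Ev; [|left; intros; rewrite shape_opPI, Ev; auto].
    destruct (shPI_cases s p (eq_refl (arity_of s))) as [H|[p' [idx [E H]]]].
    + left; intros; rewrite shape_opPI, Ev; auto.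
    + right; right. exists s, p', (fun i => CApp v0 (numeral Sg (idx i))). split.
      * intros; rewrite shape_opPI, Ev; auto.
      * intros sigma Ht i. inversion Ht; subst. econstructor; eauto. apply numeral_typed.
Qed.

End Op.

Unset Implicit Arguments.


Section Op2.
Variable Sg : signature.
Local Notation val := (val Sg).
Local Notation com := (com Sg).
Local Notation tree := (tree Sg).
Local Notation config := (config Sg).

Lemma run_term k (c cf : config) : run k c = Some cf -> terminal cf = true.
Proof.
  revert c; induction k; intros c; simpl; destruct (terminal c) eqn:T;
  intros H; try (inversion H; subst; auto; fail); try discriminate.
  destruct (step c); [eauto|discriminate].
Qed.

Lemma run_mono k j (c cf : config) : run k c = Some cf -> run (k + j) c = Some cf.
Proof.
  revert c; induction k; intros c H.
  - simpl in H. destruct (terminal c) eqn:T; [|discriminate]. inversion H; subst.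
    destruct j; simpl; rewrite T; auto.
  - simpl in H |- *. destruct (terminal c); auto.
    destruct (step c); [eauto|discriminate].
Qed.

Lemma run_det k k' (c a b : config) : run k c = Some a -> run k' c = Some b -> a = b.
Proof.
  intros H1 H2. apply (run_mono _ (k' - k)) in H1. apply (run_mono _ (k - k')) in H2.
  replace (k' + (k - k')) with (k + (k' - k)) in H2 by lia. congruence.
Qed.

Inductive star : config -> config -> Prop :=
| star_refl c : star c c
| star_step c c' c'' : terminal c = false -> step c = Some c' -> star c' c'' -> star c c''.

Lemma run_star k (c cf : config) : run k c = Some cf -> star c cf.
Proof.
  revert c; induction k; intros c; simpl; destruct (terminal c) eqn:T; intros H;
  try (inversion H; subst; constructor; fail); try discriminate.
  destruct (step c) eqn:E; [|discriminate]. econstructor; eauto.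
Qed.

Lemma star_run (c cf : config) : star c cf -> terminal cf = true -> exists k, run k c = Some cf.
Proof.
  induction 1; intros T.
  - exists 0. simpl. rewrite T. auto.
  - destruct (IHstar T) as [k Hk]. exists (S k). simpl. rewrite H, H0. auto.
Qed.

Lemma optree_term k (c cf : config) : run k c = Some cf -> optree_cfg c = shape (@optree_cfg Sg) cf.
Proof.
  intros Hk. rewrite optree_unfold. unfold optree_body.
  destruct excluded_middle_informative as [H|H]; [|exfalso; apply H; exists k; congruence].
  destruct constructive_indefinite_description as [k0 H0]. simpl.
  destruct (run k0 c) eqn:E; [|contradiction].
  rewrite (run_det _ _ _ _ _ E Hk). reflexivity.
Qed.

Lemma optree_div (c : config) : (forall k, run k c = None) -> optree_cfg c = Bot.
Proof.
  intros Hk. rewrite optree_unfold. unfold optree_body.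
  destruct excluded_middle_informative as [H|H]; auto.
  exfalso. destruct H as [k H]. apply H, Hk.
Qed.

Lemma run_stepS k (c c' : config) : terminal c = false -> step c = Some c' -> run (S k) c = run k c'.
Proof. intros T E. simpl. rewrite T, E. reflexivity. Qed.

Lemma optree_step (c c' : config) : terminal c = false -> step c = Some c' ->
  optree_cfg c = optree_cfg c'.
Proof.
  intros T E. destruct (classic (exists k cf, run k c' = Some cf)) as [[k [cf H]]|H].
  - rewrite (optree_term _ _ _ H). apply optree_term with (k := S k). rewrite (run_stepS k _ _ T E). auto.
  - rewrite !optree_div; auto.
    + intros k. destruct (run k c') eqn:R; auto. exfalso; eauto.
    + intros [|k]; simpl; rewrite T; auto. rewrite E.
      destruct (run k c') eqn:R; auto. exfalso; eauto.
Qed.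

Lemma optree_star (c c' : config) : star c c' -> optree_cfg c = optree_cfg c'.
Proof. induction 1; auto. rewrite (optree_step _ _ H H0). auto. Qed.

Lemma optree_terminal (c : config) : terminal c = true -> optree_cfg c = shape (@optree_cfg Sg) c.
Proof. intros T. apply optree_term with (k := 0). simpl. rewrite T. auto. Qed.

Fixpoint approx (n : nat) (c : config) : tree val :=
  match n with
  | 0 => Bot
  | S n' => if terminal c then shape (approx n') c else
            match step c with Some c' => approx n' c' | None => Bot end
  end.

Lemma approx_star (c c' : config) : star c c' -> exists j, forall n, approx (j + n) c = approx n c'.
Proof.
  induction 1.
  - exists 0; auto.
  - destruct IHstar as [j Hj]. exists (S j). intros n. simpl. rewrite H, H0. auto.
Qed.

Lemma approx_div (c : config) : (forall k, run k c = None) -> forall n, approx n c = Bot.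
Proof.
  intros H n; revert c H; induction n; intros c H; simpl; auto.
  destruct (terminal c) eqn:T.
  - exfalso. specialize (H 0). simpl in H. rewrite T in H. discriminate.
  - destruct (step c) eqn:E; auto. apply IHn. intros k.
    rewrite <- (run_stepS k _ _ T E). auto.
Qed.

Lemma shape_mono (f g : config -> tree val) cf :
  (forall c, tle (f c) (g c)) -> tle (shape f cf) (shape g cf).
Proof.
  intros H. destruct cf as [stk m].
  destruct (shape_cases m) as [E|[[v ->]|[s [p [ch [E _]]]]]].
  - rewrite E. constructor.
  - rewrite !shape_ret. apply tle_refl.
  - rewrite !E. constructor. auto.
Qed.

Lemma approx_mono n (c : config) : tle (approx n c) (approx (S n) c).
Proof.
  revert c; induction n; intros c; [constructor|].
  simpl (approx (S n) c). simpl (approx (S (S n)) c).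
  destruct (terminal c).
  - apply shape_mono; auto.
  - destruct (step c); [auto|constructor].
Qed.

Lemma approx_mono' n m (c : config) : n <= m -> tle (approx n c) (approx m c).
Proof.
  induction 1; [apply tle_refl|]. eapply tle_trans; eauto. apply approx_mono.
Qed.

Lemma approx_le_optree n (c : config) : tle (approx n c) (optree_cfg c).
Proof.
  revert c; induction n; intros c; [constructor|]. simpl.
  destruct (terminal c) eqn:T.
  - rewrite (optree_terminal _ T). apply shape_mono; auto.
  - destruct (step c) eqn:E; [|constructor]. rewrite (optree_step _ _ T E). auto.
Qed.

Lemma node_inj {X} (s : Sg) p p' (k k' : chi (arity_of s) -> tree X) :
  Node s p k = Node s p' k' -> k = k'.
Proof.
  intros H. injection H; intros;
  repeat match goal with HH : existT _ _ _ = existT _ _ _ |- _ => apply inj_pair2 in HH end;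
  auto.
Qed.

Lemma tle_step_refl {X} (S : tree X -> tree X -> Prop) t : tle_step S t t.
Proof. destruct t; simpl; auto. eexists; split; [reflexivity|]. intros; right; apply tle_refl. Qed.

Lemma approx_sup (A : val -> Prop) (c : config) (u : tree unit) :
  (forall n, tle (restrict A (approx n c)) u) -> tle (restrict A (optree_cfg c)) u.
Proof.
  intros H.
  apply (tle_coind (fun a u => exists c, a = restrict A (optree_cfg c) /\
                        forall n, tle (restrict A (approx n c)) u)); [|eauto].
  clear c u H. intros a u [c [-> H]].
  destruct (classic (exists k cf, run k c = Some cf)) as [[k [cf Hk]]|Hd].
  - rewrite (optree_term _ _ _ Hk).
    destruct (approx_star _ _ (run_star _ _ _ Hk)) as [j Hj].
    pose proof (run_term _ _ _ Hk) as T.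
    assert (Ha : forall n, approx (j + S n) c = shape (approx n) cf).
    { intros n. rewrite Hj. simpl. rewrite T. auto. }
    destruct cf as [stk m].
    destruct (shape_cases m) as [E|[[v ->]|[s [p [ch [E _]]]]]].
    + rewrite E, restrict_bot. simpl; auto.
    + specialize (H (j + 1)). rewrite Ha, shape_ret in H. rewrite shape_ret.
      destruct (restrict A (Leaf v)) eqn:R; simpl; auto.
      * apply tle_leaf_inv in H. auto.
      * rewrite restrict_leaf in R. destruct excluded_middle_informative; discriminate.
    + rewrite E, restrict_node. simpl.
      pose proof (H (j + 1)) as H0. rewrite Ha, E, restrict_node in H0.
      apply tle_node_inv in H0 as [k' [-> _]]. exists k'. split; auto.
      intros i; left. exists (stk, ch i). split; auto.
      intros n. specialize (H (j + S n)). rewrite Ha, E, restrict_node in H.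
      apply tle_node_inv in H as [k'' [E' Hk'']].
      apply node_inj in E'. subst. auto.
  - rewrite optree_div, restrict_bot; simpl; auto.
    intros k. destruct (run k c) eqn:R; auto. exfalso; eauto.
Qed.

End Op2.

Section Op3.
Variable Sg : signature.
Local Notation val := (val Sg).
Local Notation com := (com Sg).
Local Notation tree := (tree Sg).
Local Notation config := (config Sg).

Lemma step_app (stk stk2 : list com) (M : com) : terminal (stk, M) = false ->
  terminal (stk ++ stk2, M) = false /\
  step (stk ++ stk2, M) = option_map (fun c => (fst c ++ stk2, snd c)) (step (stk, M)).
Proof.
  intros T. destruct M; destruct stk; simpl in *; try discriminate; split; auto;
  repeat (match goal with |- context [match ?x with _ => _ end] => destruct x end; simpl; auto).
Qed.

Lemma terminal_cases (stk : list com) (M : com) : terminal (stk, M) = true ->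
  (exists v, M = CRet v /\ stk = []) \/ (forall stk', terminal (stk', M) = true).
Proof.
  intros T. destruct M; destruct stk; simpl in *; try discriminate;
  try (right; intros [|]; reflexivity). left; eauto.
Qed.

Lemma approx_app n m (stk stk2 : list com) (M : com) : n <= m ->
  tle (approx Sg n (stk ++ stk2, M)) (bind (approx Sg n (stk, M)) (fun v => approx Sg m (stk2, CRet v))).
Proof.
  revert stk M; induction n; intros stk M Hnm; [constructor|].
  destruct (terminal (stk, M)) eqn:T.
  - destruct (terminal_cases stk M T) as [[v [-> ->]]|Hall].
    + replace (approx Sg (S n) ([], CRet v)) with (@Leaf Sg _ v) by reflexivity.
      rewrite bind_leaf. simpl app.
      apply (approx_mono' _ (S n) m). lia.
    + cbn [approx]. rewrite T, (Hall (stk ++ stk2)).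
      destruct (shape_cases M) as [E|[[v ->]|[s [p [ch [E _]]]]]].
      * rewrite !E. constructor.
      * specialize (Hall [dflt Sg]). simpl in Hall. discriminate.
      * rewrite !E, bind_node. constructor. intros i. apply IHn. lia.
  - cbn [approx]. destruct (step_app stk stk2 M T) as [T2 S2]. rewrite T, T2, S2.
    destruct (step (stk, M)) as [[stk' M']|]; simpl.
    + apply IHn. lia.
    + constructor.
Qed.

Lemma star_app (c c' : config) (stk2 : list com) : star Sg c c' ->
  star Sg (fst c ++ stk2, snd c) (fst c' ++ stk2, snd c').
Proof.
  induction 1; [constructor|].
  destruct c as [stk M]. destruct (step_app stk stk2 M H) as [T2 S2].
  simpl. econstructor; [exact T2| |exact IHstar]. rewrite S2, H0. reflexivity.
Qed.

Lemma optree_bind (stk stk2 : list com) (M : com) :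
  tle (bind (optree_cfg (stk, M)) (fun v => optree_cfg (stk2, CRet v))) (optree_cfg (stk ++ stk2, M)).
Proof.
  apply (tle_coind (fun a b => exists stk M, a = bind (optree_cfg (stk, M)) (fun v => optree_cfg (stk2, CRet v))
                                  /\ b = optree_cfg (stk ++ stk2, M))); [|eauto].
  clear stk M. intros a b [stk [M [-> ->]]].
  destruct (classic (exists k cf, run k (stk, M) = Some cf)) as [[k [[stk' M'] Hk]]|Hd].
  - rewrite (optree_term _ _ _ _ Hk).
    pose proof (star_app _ _ stk2 (run_star _ _ _ _ Hk)) as Hs. simpl in Hs.
    rewrite (optree_star _ _ _ Hs).
    pose proof (run_term _ _ _ _ Hk) as T.
    destruct (terminal_cases stk' M' T) as [[v [-> ->]]|Hall].
    + rewrite shape_ret, bind_leaf. simpl app. apply tle_step_refl.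
    + rewrite (optree_terminal _ _ (Hall _)).
      destruct (shape_cases M') as [E|[[v ->]|[s [p [ch [E _]]]]]].
      * rewrite E, bind_bot. simpl; auto.
      * specialize (Hall [dflt Sg]). simpl in Hall. discriminate.
      * rewrite !E, bind_node. simpl. eexists; split; [reflexivity|]. intros i; left; eauto.
  - rewrite (optree_div _ (stk, M)), bind_bot; simpl; auto.
    intros k. destruct (run k (stk, M)) eqn:R; auto. exfalso; eauto.
Qed.

Inductive tstack : list com -> ty -> ty -> Prop :=
| ts_nil t : tstack [] t t
| ts_cons n stk t t' t'' : tc [t] n t' -> tstack stk t' t'' -> tstack (n :: stk) t t''.

Definition tcfg (c : config) (tau : ty) : Prop :=
  exists sigma, tc [] (snd c) sigma /\ tstack (fst c) sigma tau.

Lemma step_pres (c c' : config) tau : tcfg c tau -> step c = Some c' -> tcfg c' tau.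
Proof.
  destruct c as [stk M]. intros [sigma [HM Hs]] E. simpl in *.
  destruct M; simpl in E; try discriminate.
  - destruct v; try discriminate. inversion E; subst.
    inversion HM; subst. inversion H2; subst.
    exists sigma. split; auto. eapply typing_subst1; eauto.
  - destruct stk as [|n stk']; try discriminate. inversion E; subst.
    inversion Hs; subst. inversion HM; subst.
    exists t'. split; auto. eapply typing_subst1; eauto.
  - inversion E; subst. inversion HM; subst. exists t. split; auto. simpl. econstructor; eauto.
  - destruct v as [| | |t0 b|]; try discriminate. destruct t0 as [| |r t1]; try discriminate.
    inversion E; subst. inversion HM as [| | |G v0 r0 t2 Hv| | | | |]; subst.
    inversion Hv; subst.
    assert (Hw : tv [r0] (ren_v S (VLam (Arr r0 t2) b)) (Arr (Arr r0 t2) (Arr r0 t2))).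
    { eapply (proj1 (typing_ren Sg)); eauto. unfold ctx_ren. intros i u Hi. destruct i; discriminate. }
    simpl in Hw.
    exists (Arr r0 t2). simpl. split; auto.
    econstructor; eauto. constructor. econstructor.
    + constructor. exact Hw.
    + econstructor; constructor; reflexivity.
  - inversion HM; subst. destruct v; try discriminate; inversion E; subst.
    + exists sigma; split; auto.
    + exists sigma; split; auto. simpl. eapply typing_subst1; eauto.
      inversion H3; subst; auto.
Qed.

Lemma star_pres (c c' : config) tau : star Sg c c' -> tcfg c tau -> tcfg c' tau.
Proof. induction 1; auto. intros H2. apply IHstar. eapply step_pres; eauto. Qed.

Definition trel_step {X Y} (Q : X -> Y -> Prop) (S : tree X -> tree Y -> Prop) (t : tree X) (t' : tree Y) : Prop :=
  match t with
  | Bot => True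
  | Leaf x => exists y, t' = Leaf y /\ Q x y
  | Node s p k => exists k', t' = Node s p k' /\ forall i, S (k i) (k' i)
  end.

Lemma trel_coind {X Y} (Q : X -> Y -> Prop) (S : tree X -> tree Y -> Prop) :
  (forall t t', S t t' -> trel_step Q S t t') -> forall t t', S t t' -> trel Q t t'.
Proof.
  intros H. cofix CH. intros t t' Hs. specialize (H _ _ Hs) as Hst.
  destruct t as [|x|s p k]; simpl in Hst.
  - constructor.
  - destruct Hst as [y [E Hq]]. subst. constructor; auto.
  - destruct Hst as [k' [E Hk]]. subst t'. constructor. intros i. apply CH. apply Hk.
Qed.

Lemma optree_typed (c : config) tau : tcfg c tau ->
  trel (fun v w => v = w /\ tv [] v tau) (optree_cfg c) (optree_cfg c).
Proof.
  intros Hc.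
  apply (trel_coind _ (fun a b => exists c, a = optree_cfg c /\ b = a /\ tcfg c tau)); [|eauto].
  clear c Hc. intros a b [c [-> [-> Hc]]].
  destruct (classic (exists k cf, run k c = Some cf)) as [[k [[stk' M'] Hk]]|Hd].
  - rewrite (optree_term _ _ _ _ Hk).
    pose proof (star_pres _ _ _ (run_star _ _ _ _ Hk) Hc) as Hc'.
    pose proof (run_term _ _ _ _ Hk) as T.
    destruct (terminal_cases stk' M' T) as [[v [-> ->]]|Hall].
    + rewrite shape_ret. simpl. exists v. split; auto. split; auto.
      destruct Hc' as [sigma [Hv Hs]]. simpl in *. inversion Hs; subst. inversion Hv; subst. auto.
    + destruct (shape_cases M') as [E|[[v ->]|[s [p [ch [E Ht]]]]]].
      * rewrite E. simpl; auto.
      * specialize (Hall [dflt Sg]). simpl in Hall. discriminate.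
      * rewrite E. simpl. eexists; split; [reflexivity|]. intros i.
        exists (stk', ch i). split; auto. split; auto.
        destruct Hc' as [sigma [Hv Hs]]. simpl in Hv, Hs. exists sigma. split; [apply Ht; auto|auto].
  - rewrite optree_div; simpl; auto.
    intros k. destruct (run k c) eqn:R; auto. exfalso; eauto.
Qed.

End Op3.

Section Mod.
Variable Sg : signature.
Local Notation val := (val Sg).
Local Notation com := (com Sg).
Local Notation tree := (tree Sg).
Local Notation config := (config Sg).
Variable O : Type.
Variable osem : O -> tree unit -> Prop.
Hypothesis Hscott : forall o, scott_open (osem o).
Hypothesis Hdec : decomposable osem.

Lemma osem_up o t t' : tle t t' -> osem o t -> osem o t'.
Proof. intros H1 H2. exact (proj1 (Hscott o) _ _ H1 H2). Qed.

Lemma omod_monoP {X} o (A B : X -> Prop) t : (forall x, A x -> B x) -> omod osem o A t -> omod osem o B t.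
Proof. intros H1 H2. eapply osem_up; [|exact H2]. apply restrict_monoP; auto. Qed.

Lemma lift_mono {X} (R R' : X -> X -> Prop) t t' :
  (forall x y, R x y -> R' x y) -> lift osem R t t' -> lift osem R' t t'.
Proof.
  intros HR H A o Ht. eapply omod_monoP; [|apply H; exact Ht].
  intros y [x [Hx Hxy]]. exists x; auto.
Qed.

Lemma lift_comp {X} (R R' : X -> X -> Prop) t1 t2 t3 :
  lift osem R t1 t2 -> lift osem R' t2 t3 ->
  lift osem (fun x z => exists y, R x y /\ R' y z) t1 t3.
Proof.
  intros H1 H2 A o Ht. eapply omod_monoP; [|apply H2; apply H1; exact Ht].
  intros z [y [[x [Hx Hxy]] Hyz]]. exists x; eauto.
Qed.

Lemma lift_trel {X} (Q R : X -> X -> Prop) t t' :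
  trel Q t t' -> (forall x y, Q x y -> R x y) -> lift osem R t t'.
Proof.
  intros H HQ A o Ht. eapply osem_up; [|exact Ht].
  apply trel_restrict with (Q := Q); auto. intros x y Hq Hx. exists x; auto.
Qed.

Lemma lift_bot {X} (R : X -> X -> Prop) t' : lift osem R Bot t'.
Proof.
  intros A o Ht. eapply osem_up; [|exact Ht]. unfold omod in *. rewrite restrict_bot. constructor.
Qed.

Lemma fsem_lift {X} (R : X -> X -> Prop) t t' : lift osem R t t' ->
  forall phi A, fsem osem phi (restrict A t) -> fsem osem phi (restrict (image R A) t').
Proof.
  intros HL phi. induction phi as [o|o|I f IH|I f IH]; intros A H; simpl in *.
  - unfold omod in *.
    assert (H1 : osem o (restrict A t)).
    { eapply osem_up; [|exact H]. eapply tle_trans; [apply restrict_restrict1|].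
      apply restrict_monoP. tauto. }
    apply HL in H1. eapply osem_up; [|exact H1].
    eapply tle_trans; [|apply (restrict_restrict2 (image R A) (fun _ => True))].
    apply restrict_monoP. tauto.
  - unfold omod in *.
    assert (H1 : osem o (restrict (fun x => A x /\ False) t)).
    { eapply osem_up; [|exact H]. apply restrict_restrict1. }
    apply HL in H1. eapply osem_up; [|exact H1].
    eapply tle_trans; [|apply (restrict_restrict2 (image R A) (fun _ => False))].
    apply restrict_monoP. intros y [x [[_ []] _]].
  - destruct H as [i Hi]. exists i. auto.
  - intros i. auto.
Qed.

Lemma mu_lift {X} (R : X -> X -> Prop) (Q : tree X -> tree X -> Prop) r r' :
  (forall t t', Q t t' -> lift osem R t t') -> lift osem Q r r' -> lift osem R (mu r) (mu r').
Proof.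
  intros HQ HL A o H.
  set (rr := tmap (restrict A) r). set (rr' := tmap (restrict (image R A)) r').
  assert (Hc : curly_le osem rr rr').
  { intros o' phi H1. unfold omod in *.
    assert (H2 : omod osem o' (fun t => fsem osem phi (restrict A t)) r).
    { unfold omod. eapply osem_up; [|exact H1]. apply restrict_map1. }
    apply HL in H2. unfold omod in H2.
    eapply osem_up; [|exact H2]. eapply tle_trans; [|apply restrict_map2].
    apply restrict_monoP. intros t' [t [Ht Htt']]. eapply fsem_lift; eauto. }
  specialize (Hdec _ _ Hc (FTop o)). simpl in Hdec. unfold omod in *.
  assert (H3 : osem o (restrict (fun _ => True) (mu rr'))).
  { apply Hdec. eapply osem_up; [|exact H].
    eapply tle_trans; [apply restrict_mu1|]. apply restrict_True1. }
  eapply osem_up; [|exact H3].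
  eapply tle_trans; [apply restrict_True2|]. apply restrict_mu2.
Qed.

Lemma bind_lift {X} (R1 R : X -> X -> Prop) t t' (f g : X -> tree X) :
  lift osem R1 t t' -> (forall x y, R1 x y -> lift osem R (f x) (g y)) ->
  lift osem R (bind t f) (bind t' g).
Proof.
  intros Ht Hfg. unfold bind. apply mu_lift with (Q := lift osem R); auto.
  intros A o H. unfold omod in *.
  assert (H1 : omod osem o (fun x => A (f x)) t).
  { unfold omod. eapply osem_up; [|exact H]. apply restrict_map1. }
  apply Ht in H1. unfold omod in H1. eapply osem_up; [|exact H1].
  eapply tle_trans; [|apply restrict_map2]. apply restrict_monoP.
  intros y [x [Hx Hxy]]. exists (f x). auto.
Qed.

Lemma node_lift {X} (R : X -> X -> Prop) (s : Sg) p k k' :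
  (forall i, lift osem R (k i) (k' i)) -> lift osem R (Node s p k) (Node s p k').
Proof.
  intros H. rewrite <- (mu_leaves s p k), <- (mu_leaves s p k').
  apply mu_lift with (Q := lift osem R); auto.
  apply lift_trel with (Q := lift osem R); auto.
  constructor. intros i. constructor. auto.
Qed.

Local Notation BV := (bisim_v osem).
Local Notation BC := (bisim_c osem).

Lemma bisim_sim : app_sim osem BV BC /\ symmetric_fam BV BC.
Proof.
  split; [split; [|split; [|split; [|split]]]|split].
  - intros t v w [Rv [Rc [[H _] [_ Hr]]]]. eauto.
  - intros t v w [Rv [Rc [[_ [H _]] [_ Hr]]]]. eauto.
  - intros v w [Rv [Rc [[_ [_ [H _]]] [_ Hr]]]]. eauto.
  - intros t m n [Rv [Rc [[H1 [H2 [H3 [H4 H5]]]] [Hs Hr]]]].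
    pose proof (conj H1 (conj H2 (conj H3 (conj H4 H5)))) as HA.
    eapply lift_mono; [|apply H4; exact Hr]. intros x y Hxy. exists Rv, Rc.
    split; [exact HA|split; auto].
  - intros t' t v w [Rv [Rc [[H1 [H2 [H3 [H4 H5]]]] [Hs Hr]]]] u Hu.
    pose proof (conj H1 (conj H2 (conj H3 (conj H4 H5)))) as HA.
    exists Rv, Rc. split; [exact HA|split; eauto].
  - intros t v w [Rv [Rc [HA [[Hs1 Hs2] Hr]]]]. exists Rv, Rc. split; auto. split; auto. split; auto.
  - intros t v w [Rv [Rc [HA [[Hs1 Hs2] Hr]]]]. exists Rv, Rc. split; auto. split; auto. split; auto.
Qed.

Lemma bisim_refl_both :
  (forall t v, tv [] v t -> BV t v v) /\ (forall t m, tc [] m t -> BC t m m).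
Proof.
  set (Rv := fun t (v w : val) => v = w /\ tv [] v t).
  set (Rc := fun t (m n : com) => m = n /\ tc [] m t).
  assert (HA : app_sim osem Rv Rc /\ symmetric_fam Rv Rc).
  { split; [split; [|split; [|split; [|split]]]|split]; unfold Rv, Rc.
    - intros t v w [<- H]; auto.
    - intros t v w [<- H]; auto.
    - intros v w [<- H]; auto.
    - intros t m n [<- H]. apply lift_trel with (Q := fun v w => v = w /\ tv [] v t).
      + apply optree_typed. exists t. split; auto. constructor.
      + auto.
    - intros t' t v w [<- H] u Hu. split; auto. econstructor; eauto.
    - intros t v w [<- H]; auto.
    - intros t v w [<- H]; auto. }
  split.
  - intros t v H. exists Rv, Rc. split; [apply HA|]. split; [apply HA|]. unfold Rv; auto.
  - intros t m H. exists Rv, Rc. split; [apply HA|]. split; [apply HA|]. unfold Rc; auto.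
Qed.

Lemma bisim_trans_both :
  (forall t a b c, BV t a b -> BV t b c -> BV t a c) /\
  (forall t a b c, BC t a b -> BC t b c -> BC t a c).
Proof.
  destruct bisim_sim as [[T1 [T2 [T3 [T4 T5]]]] [S1 S2]].
  set (Rv := fun t (a c : val) => exists b, BV t a b /\ BV t b c).
  set (Rc := fun t (a c : com) => exists b, BC t a b /\ BC t b c).
  assert (HA : app_sim osem Rv Rc /\ symmetric_fam Rv Rc).
  { split; [split; [|split; [|split; [|split]]]|split]; unfold Rv, Rc.
    - intros t v w [b [H1 H2]]. split; [apply (T1 _ _ _ H1)|apply (T1 _ _ _ H2)].
    - intros t v w [b [H1 H2]]. split; [apply (T2 _ _ _ H1)|apply (T2 _ _ _ H2)].
    - intros v w [b [H1 H2]]. rewrite (T3 _ _ H1). auto.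
    - intros t m n [b [H1 H2]]. eapply lift_comp; eauto.
    - intros t' t v w [b [H1 H2]] u Hu. exists (CApp b u). split; eauto.
    - intros t v w [b [H1 H2]]. exists b; auto.
    - intros t v w [b [H1 H2]]. exists b; auto. }
  split.
  - intros t a b c H1 H2. exists Rv, Rc. split; [apply HA|]. split; [apply HA|]. exists b; auto.
  - intros t a b c H1 H2. exists Rv, Rc. split; [apply HA|]. split; [apply HA|]. exists b; auto.
Qed.

End Mod.

Section Howe.
Variable Sg : signature.
Local Notation val := (val Sg).
Local Notation com := (com Sg).
Local Notation tree := (tree Sg).
Local Notation config := (config Sg).
Variable O : Type.
Variable osem : O -> tree unit -> Prop.
Hypothesis Hscott : forall o, scott_open (osem o).
Hypothesis Hdec : decomposable osem.

Local Notation BV := (bisim_v osem).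
Local Notation BC := (bisim_c osem).
Local Notation OV := (open_v BV).
Local Notation OC := (open_c BC).

Lemma ov_refl G t (v : val) : tv G v t -> OV G t v v.
Proof.
  intros H. split; [auto|split; [auto|]]. intros g Hg.
  apply (proj1 (bisim_refl_both _ _ _ Hscott)). eapply (proj1 (typing_subst Sg)); eauto.
Qed.

Lemma oc_refl G t (m : com) : tc G m t -> OC G t m m.
Proof.
  intros H. split; [auto|split; [auto|]]. intros g Hg.
  apply (proj2 (bisim_refl_both _ _ _ Hscott)). eapply (proj2 (typing_subst Sg)); eauto.
Qed.

Lemma ov_sym G t (v w : val) : OV G t v w -> OV G t w v.
Proof.
  intros [H1 [H2 H3]]. split; [auto|split; [auto|]]. intros g Hg.
  apply (proj1 (proj2 (bisim_sim _ _ _ Hscott))). auto.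
Qed.

Lemma oc_sym G t (v w : com) : OC G t v w -> OC G t w v.
Proof.
  intros [H1 [H2 H3]]. split; [auto|split; [auto|]]. intros g Hg.
  apply (proj2 (proj2 (bisim_sim _ _ _ Hscott))). auto.
Qed.

Lemma ov_trans G t (a b c : val) : OV G t a b -> OV G t b c -> OV G t a c.
Proof.
  intros [H1 [H2 H3]] [H4 [H5 H6]]. split; [auto|split; [auto|]]. intros g Hg.
  eapply (proj1 (bisim_trans_both _ _ _ Hscott)); eauto.
Qed.

Lemma oc_trans G t (a b c : com) : OC G t a b -> OC G t b c -> OC G t a c.
Proof.
  intros [H1 [H2 H3]] [H4 [H5 H6]]. split; [auto|split; [auto|]]. intros g Hg.
  eapply (proj2 (bisim_trans_both _ _ _ Hscott)); eauto.
Qed.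

Lemma ctx_sub_comp G D (g h : nat -> val) :
  ctx_sub G D g -> closed_inst D h -> closed_inst G (fun i => subst_v h (g i)).
Proof.
  intros Hg Hh i t Hi. eapply (proj1 (typing_subst Sg)); eauto.
Qed.

Lemma ov_subst G D t (v w : val) g : OV G t v w -> ctx_sub G D g ->
  OV D t (subst_v g v) (subst_v g w).
Proof.
  intros [H1 [H2 H3]] Hg. split; [|split].
  - eapply (proj1 (typing_subst Sg)); eauto.
  - eapply (proj1 (typing_subst Sg)); eauto.
  - intros h Hh. rewrite !(proj1 (subst_subst Sg)). apply H3. eapply ctx_sub_comp; eauto.
Qed.

Lemma oc_subst G D t (v w : com) g : OC G t v w -> ctx_sub G D g ->
  OC D t (subst_c g v) (subst_c g w).
Proof.
  intros [H1 [H2 H3]] Hg. split; [|split].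
  - eapply (proj2 (typing_subst Sg)); eauto.
  - eapply (proj2 (typing_subst Sg)); eauto.
  - intros h Hh. rewrite !(proj2 (subst_subst Sg)). apply H3. eapply ctx_sub_comp; eauto.
Qed.

Lemma closed_inst_nil : closed_inst (Sg := Sg) [] (VVar Sg).
Proof. intros [|i] t H; discriminate. Qed.

Lemma ov_closed t (v w : val) : OV [] t v w -> BV t v w.
Proof.
  intros [H1 [H2 H3]]. specialize (H3 _ closed_inst_nil).
  rewrite !(proj1 (subst_id Sg)) in H3. auto.
Qed.

Lemma oc_closed t (v w : com) : OC [] t v w -> BC t v w.
Proof.
  intros [H1 [H2 H3]]. specialize (H3 _ closed_inst_nil).
  rewrite !(proj2 (subst_id Sg)) in H3. auto.
Qed.

Lemma closed_ov t (v w : val) : BV t v w -> OV [] t v w.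
Proof.
  intros H. destruct (proj1 (proj1 (bisim_sim _ _ _ Hscott)) _ _ _ H) as [T1 T2].
  split; [auto|split; [auto|]]. intros g Hg.
  rewrite (closed_subst_v _ T1), (closed_subst_v _ T2). auto.
Qed.

Lemma closed_oc t (v w : com) : BC t v w -> OC [] t v w.
Proof.
  intros H. destruct (proj1 (proj2 (proj1 (bisim_sim _ _ _ Hscott))) _ _ _ H) as [T1 T2].
  split; [auto|split; [auto|]]. intros g Hg.
  rewrite (closed_subst_c _ T1), (closed_subst_c _ T2). auto.
Qed.

Lemma ov_ren G D t (v w : val) f : OV G t v w -> ctx_ren G D f -> OV D t (ren_v f v) (ren_v f w).
Proof.
  intros H Hf. rewrite !(proj1 (ren_as_subst Sg)). apply ov_subst with (G := G); auto.
  intros i u Hi. constructor. auto.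
Qed.

Lemma oc_ren G D t (v w : com) f : OC G t v w -> ctx_ren G D f -> OC D t (ren_c f v) (ren_c f w).
Proof.
  intros H Hf. rewrite !(proj2 (ren_as_subst Sg)). apply oc_subst with (G := G); auto.
  intros i u Hi. constructor. auto.
Qed.

Inductive howe_v : ctx -> ty -> val -> val -> Prop :=
| hv_var G i t W : nth_error G i = Some t -> OV G t (VVar Sg i) W -> howe_v G t (VVar Sg i) W
| hv_unit G W : OV G One (VUnit Sg) W -> howe_v G One (VUnit Sg) W
| hv_zero G W : OV G Nat (VZ Sg) W -> howe_v G Nat (VZ Sg) W
| hv_succ G v v' W : howe_v G Nat v v' -> OV G Nat (VS v') W -> howe_v G Nat (VS v) W
| hv_lam G t t' m m' W : howe_c (t :: G) t' m m' -> OV G (Arr t t') (VLam t m') W ->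
    howe_v G (Arr t t') (VLam t m) W
with howe_c : ctx -> ty -> com -> com -> Prop :=
| hc_app G t t' v v' w w' N : howe_v G (Arr t t') v v' -> howe_v G t w w' ->
    OC G t' (CApp v' w') N -> howe_c G t' (CApp v w) N
| hc_ret G t v v' N : howe_v G t v v' -> OC G t (CRet v') N -> howe_c G t (CRet v) N
| hc_let G t t' m m' n n' N : howe_c G t m m' -> howe_c (t :: G) t' n n' ->
    OC G t' (CLet m' n') N -> howe_c G t' (CLet m n) N
| hc_fix G r t v v' N : howe_v G (Arr (Arr r t) (Arr r t)) v v' ->
    OC G (Arr r t) (CFix v') N -> howe_c G (Arr r t) (CFix v) N
| hc_case G t v v' m m' n n' N : howe_v G Nat v v' -> howe_c G t m m' ->
    howe_c (Nat :: G) t n n' -> OC G t (CCase v' m' n') N -> howe_c G t (CCase v m n) N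
| hc_opF G t (s : Sg) n ms ms' N : arity_of s = AFin n -> length ms = n -> length ms' = n ->
    (forall i, i < n -> howe_c G t (nth i ms (dflt Sg)) (nth i ms' (dflt Sg))) ->
    OC G t (COpF s ms') N -> howe_c G t (COpF s ms) N
| hc_opPF G t (s : Sg) n v v' ms ms' N : arity_of s = APFin n -> howe_v G Nat v v' ->
    length ms = n -> length ms' = n ->
    (forall i, i < n -> howe_c G t (nth i ms (dflt Sg)) (nth i ms' (dflt Sg))) ->
    OC G t (COpPF s v' ms') N -> howe_c G t (COpPF s v ms) N
| hc_opI G t (s : Sg) v v' N : arity_of s = AInf -> howe_v G (Arr Nat t) v v' ->
    OC G t (COpI s v') N -> howe_c G t (COpI s v) N
| hc_opPI G t (s : Sg) v v' w w' N : arity_of s = APInf -> howe_v G Nat v v' ->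
    howe_v G (Arr Nat t) w w' -> OC G t (COpPI s v' w') N -> howe_c G t (COpPI s v w) N.

Scheme howe_v_min := Minimality for howe_v Sort Prop
with howe_c_min := Minimality for howe_c Sort Prop.
Combined Scheme howe_ind from howe_v_min, howe_c_min.

Lemma nth_in_typed G t (ms : list com) n :
  length ms = n -> (forall i, i < n -> tc G (nth i ms (dflt Sg)) t) ->
  forall m, In m ms -> tc G m t.
Proof.
  intros Hl H m Hm. destruct (In_nth _ _ (dflt Sg) Hm) as [i [Hi <-]]. apply H. lia.
Qed.

Lemma howe_typed :
  (forall G t v w, howe_v G t v w -> tv G v t /\ tv G w t) /\
  (forall G t m n, howe_c G t m n -> tc G m t /\ tc G n t).
Proof.
  apply howe_ind; intros;
  repeat match goal with HH : open_v _ _ _ _ _ |- _ => destruct HH as [? [? ?]]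
                    | HH : open_c _ _ _ _ _ |- _ => destruct HH as [? [? ?]]
                    | HH : _ /\ _ |- _ => destruct HH end;
  split; auto; try (econstructor; eauto; fail).
  - econstructor; eauto. apply nth_in_typed with (n := n); auto. intros i Hi;
    match goal with HH : forall i, i < _ -> tc _ _ _ /\ _ |- _ => apply HH; auto end.
  - econstructor; eauto. apply nth_in_typed with (n := n); auto. intros i Hi;
    match goal with HH : forall i, i < _ -> tc _ _ _ /\ _ |- _ => apply HH; auto end.
Qed.

Lemma howe_ov G t (v u w : val) : howe_v G t v u -> OV G t u w -> howe_v G t v w.
Proof.
  intros H1 H2. destruct H1; econstructor; eauto using ov_trans.
Qed.

Lemma howe_oc G t (v u w : com) : howe_c G t v u -> OC G t u w -> howe_c G t v w.
Proof.
  intros H1 H2. destruct H1; econstructor; eauto using oc_trans.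
Qed.

Lemma howe_refl :
  (forall G (v : val) t, tv G v t -> howe_v G t v v) /\
  (forall G (m : com) t, tc G m t -> howe_c G t m m).
Proof.
  apply tvc_ind; intros; econstructor; eauto;
  try (apply ov_refl; econstructor; eauto; fail);
  try (apply oc_refl; econstructor; eauto; fail).
  all: try (intros i Hi; match goal with HH : forall m, In m _ -> howe_c _ _ m m |- _ =>
          apply HH; apply nth_In; lia end).
  all: try (apply oc_refl; econstructor; eauto).
Qed.

Lemma ov_howe G t (v w : val) : OV G t v w -> howe_v G t v w.
Proof. intros H. eapply howe_ov; [|exact H]. apply (proj1 howe_refl). apply H. Qed.

Lemma oc_howe G t (v w : com) : OC G t v w -> howe_c G t v w.
Proof. intros H. eapply howe_oc; [|exact H]. apply (proj2 howe_refl). apply H. Qed.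

End Howe.

Section Howe2.
Variable Sg : signature.
Local Notation val := (val Sg).
Local Notation com := (com Sg).
Local Notation tree := (tree Sg).
Local Notation config := (config Sg).
Variable O : Type.
Variable osem : O -> tree unit -> Prop.
Hypothesis Hscott : forall o, scott_open (osem o).

Local Notation BV := (bisim_v osem).
Local Notation BC := (bisim_c osem).
Local Notation OV := (open_v BV).
Local Notation OC := (open_c BC).
Local Notation HV := (howe_v Sg O osem).
Local Notation HC := (howe_c Sg O osem).

Ltac typ := match goal with
  | H : HV _ _ _ _ |- _ => destruct (proj1 (howe_typed _ _ osem) _ _ _ _ H); clear H; typ
  | H : HC _ _ _ _ |- _ => destruct (proj2 (howe_typed _ _ osem) _ _ _ _ H); clear H; typ
  | _ => idtac end.

Lemma hc_succ G v v' : HV G Nat v v' -> HV G Nat (VS v) (VS v').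
Proof. intros H. econstructor; eauto. apply (ov_refl _ _ _ Hscott); auto. pose proof H; typ. constructor; auto. Qed.

Lemma hc_lam G t t' m m' : HC (t :: G) t' m m' -> HV G (Arr t t') (VLam t m) (VLam t m').
Proof. intros H. econstructor; eauto. apply (ov_refl _ _ _ Hscott); auto. pose proof H; typ. constructor; auto. Qed.

Lemma hc_app' G t t' v v' w w' : HV G (Arr t t') v v' -> HV G t w w' ->
  HC G t' (CApp v w) (CApp v' w').
Proof. intros H1 H2. econstructor; eauto. apply (oc_refl _ _ _ Hscott); auto. pose proof H1; pose proof H2; typ. econstructor; eauto. Qed.

Lemma hc_ret' G t v v' : HV G t v v' -> HC G t (CRet v) (CRet v').
Proof. intros H. econstructor; eauto. apply (oc_refl _ _ _ Hscott); auto. pose proof H; typ. constructor; auto. Qed.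

Lemma hc_let' G t t' m m' n n' : HC G t m m' -> HC (t :: G) t' n n' ->
  HC G t' (CLet m n) (CLet m' n').
Proof. intros H1 H2. econstructor; eauto. apply (oc_refl _ _ _ Hscott); auto. pose proof H1; pose proof H2; typ. econstructor; eauto. Qed.

Lemma hc_fix' G r t v v' : HV G (Arr (Arr r t) (Arr r t)) v v' -> HC G (Arr r t) (CFix v) (CFix v').
Proof. intros H. econstructor; eauto. apply (oc_refl _ _ _ Hscott); auto. pose proof H; typ. econstructor; eauto. Qed.

Lemma hc_case' G t v v' m m' n n' : HV G Nat v v' -> HC G t m m' -> HC (Nat :: G) t n n' ->
  HC G t (CCase v m n) (CCase v' m' n').
Proof. intros H1 H2 H3. econstructor; eauto. apply (oc_refl _ _ _ Hscott); auto. pose proof H1; pose proof H2; pose proof H3; typ. econstructor; eauto. Qed.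

Lemma hc_opF' G t (s : Sg) n ms ms' : arity_of s = AFin n -> length ms = n -> length ms' = n ->
  (forall i, i < n -> HC G t (nth i ms (dflt Sg)) (nth i ms' (dflt Sg))) ->
  HC G t (COpF s ms) (COpF s ms').
Proof.
  intros E L1 L2 H. econstructor; eauto. apply (oc_refl _ _ _ Hscott). econstructor; eauto.
  apply nth_in_typed with (n := n); auto. intros i Hi. specialize (H i Hi). typ. auto.
Qed.

Lemma hc_opPF' G t (s : Sg) n v v' ms ms' : arity_of s = APFin n -> HV G Nat v v' ->
  length ms = n -> length ms' = n ->
  (forall i, i < n -> HC G t (nth i ms (dflt Sg)) (nth i ms' (dflt Sg))) ->
  HC G t (COpPF s v ms) (COpPF s v' ms').
Proof.
  intros E Hv L1 L2 H. econstructor; eauto. apply (oc_refl _ _ _ Hscott). pose proof Hv; typ. econstructor; eauto.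
  apply nth_in_typed with (n := n); auto. intros i Hi. specialize (H i Hi). typ. auto.
Qed.

Lemma hc_opI' G t (s : Sg) v v' : arity_of s = AInf -> HV G (Arr Nat t) v v' ->
  HC G t (COpI s v) (COpI s v').
Proof. intros E H. econstructor; eauto. apply (oc_refl _ _ _ Hscott); auto. pose proof H; typ. econstructor; eauto. Qed.

Lemma hc_opPI' G t (s : Sg) v v' w w' : arity_of s = APInf -> HV G Nat v v' ->
  HV G (Arr Nat t) w w' -> HC G t (COpPI s v w) (COpPI s v' w').
Proof. intros E H1 H2. econstructor; eauto. apply (oc_refl _ _ _ Hscott); auto. pose proof H1; pose proof H2; typ. econstructor; eauto. Qed.

Lemma nth_map_ren f i (ms : list com) : nth i (map (ren_c f) ms) (dflt Sg) = ren_c f (nth i ms (dflt Sg)).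
Proof. exact (map_nth (ren_c f) ms (dflt Sg) i). Qed.

Lemma nth_map_subst g i (ms : list com) : nth i (map (subst_c g) ms) (dflt Sg) = subst_c g (nth i ms (dflt Sg)).
Proof. exact (map_nth (subst_c g) ms (dflt Sg) i). Qed.

Lemma howe_ren :
  (forall G t v w, HV G t v w -> forall D f, ctx_ren G D f -> HV D t (ren_v f v) (ren_v f w)) /\
  (forall G t m n, HC G t m n -> forall D f, ctx_ren G D f -> HC D t (ren_c f m) (ren_c f n)).
Proof.
  apply howe_ind; intros; simpl.
  - econstructor; eauto. exact (ov_ren _ _ _ _ _ _ _ _ _ H0 H1).
  - econstructor. exact (ov_ren _ _ _ _ _ _ _ _ _ H H0).
  - econstructor. exact (ov_ren _ _ _ _ _ _ _ _ _ H H0).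
  - econstructor; eauto. exact (ov_ren _ _ _ _ _ _ _ _ _ H1 H2).
  - econstructor; eauto using ctx_ren_up. exact (ov_ren _ _ _ _ _ _ _ _ _ H1 H2).
  - econstructor; eauto. exact (oc_ren _ _ _ _ _ _ _ _ _ H3 H4).
  - econstructor; eauto. exact (oc_ren _ _ _ _ _ _ _ _ _ H1 H2).
  - econstructor; eauto using ctx_ren_up. exact (oc_ren _ _ _ _ _ _ _ _ _ H3 H4).
  - econstructor; eauto. exact (oc_ren _ _ _ _ _ _ _ _ _ H1 H2).
  - econstructor; eauto using ctx_ren_up. exact (oc_ren _ _ _ _ _ _ _ _ _ H5 H6).
  - apply hc_opF with (n := n) (ms' := map (ren_c f) ms'); try assumption; try (rewrite length_map; assumption).
    + intros i Hi. rewrite !nth_map_ren. eauto.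
    + exact (oc_ren _ _ _ _ _ _ _ _ _ H4 H5).
  - apply hc_opPF with (n := n) (v' := ren_v f v') (ms' := map (ren_c f) ms'); eauto; try (rewrite length_map; auto).
    + intros i Hi. rewrite !nth_map_ren. eauto.
    + exact (oc_ren _ _ _ _ _ _ _ _ _ H6 H7).
  - econstructor; eauto. exact (oc_ren _ _ _ _ _ _ _ _ _ H2 H3).
  - econstructor; eauto. exact (oc_ren _ _ _ _ _ _ _ _ _ H4 H5).
Qed.

Definition hsub G D (g g' : nat -> val) := forall i u, nth_error G i = Some u -> HV D u (g i) (g' i).

Lemma hsub_up G D g g' t : hsub G D g g' -> hsub (t :: G) (t :: D) (ups g) (ups g').
Proof.
  intros H [|i] u E; simpl in *.
  - inversion E; subst. apply (proj1 (howe_refl _ _ osem Hscott)). constructor. reflexivity.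
  - apply (proj1 howe_ren _ _ _ _ (H _ _ E)). intros j w Ej. simpl. auto.
Qed.

Lemma hsub_typed G D g g' : hsub G D g g' -> ctx_sub G D g'.
Proof. intros H i u E. specialize (H _ _ E). typ. auto. Qed.

Lemma howe_subst :
  (forall G t v w, HV G t v w -> forall D g g', hsub G D g g' -> HV D t (subst_v g v) (subst_v g' w)) /\
  (forall G t m n, HC G t m n -> forall D g g', hsub G D g g' -> HC D t (subst_c g m) (subst_c g' n)).
Proof.
  apply howe_ind; intros; simpl;
  try match goal with HH : hsub _ _ _ ?g' |- _ => pose proof (hsub_typed _ _ _ _ HH) end.
  - eapply (howe_ov _ _ _ Hscott); [apply H1; eauto |].
    refine (ov_subst _ _ _ _ _ _ _ _ _ H0 _); auto.
  - econstructor. refine (ov_subst _ _ _ _ _ _ _ _ _ H _); auto.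
  - econstructor. refine (ov_subst _ _ _ _ _ _ _ _ _ H _); auto.
  - econstructor; eauto. refine (ov_subst _ _ _ _ _ _ _ _ _ H1 _); auto.
  - econstructor; eauto using hsub_up. refine (ov_subst _ _ _ _ _ _ _ _ _ H1 _); auto.
  - econstructor; eauto. refine (oc_subst _ _ _ _ _ _ _ _ _ H3 _); auto.
  - econstructor; eauto. refine (oc_subst _ _ _ _ _ _ _ _ _ H1 _); auto.
  - econstructor; eauto using hsub_up. refine (oc_subst _ _ _ _ _ _ _ _ _ H3 _); auto.
  - econstructor; eauto. refine (oc_subst _ _ _ _ _ _ _ _ _ H1 _); auto.
  - econstructor; eauto using hsub_up. refine (oc_subst _ _ _ _ _ _ _ _ _ H5 _); auto.
  - apply hc_opF with (n := n) (ms' := map (subst_c g') ms'); try assumption; try (rewrite length_map; assumption).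
    + intros i Hi. rewrite !nth_map_subst. eauto.
    + refine (oc_subst _ _ _ _ _ _ _ _ _ H4 _); auto.
  - apply hc_opPF with (n := n) (v' := subst_v g' v') (ms' := map (subst_c g') ms'); eauto; try (rewrite length_map; auto).
    + intros i Hi. rewrite !nth_map_subst. eauto.
    + refine (oc_subst _ _ _ _ _ _ _ _ _ H6 _); auto.
  - econstructor; eauto. refine (oc_subst _ _ _ _ _ _ _ _ _ H2 _); auto.
  - econstructor; eauto. refine (oc_subst _ _ _ _ _ _ _ _ _ H4 _); auto.
Qed.

Lemma howe_subst1 t t' (b b' : com) (w w' : val) :
  HC [t] t' b b' -> HV [] t w w' -> HC [] t' (subst1 b w) (subst1 b' w').
Proof.
  intros Hb Hw. unfold subst1. apply (proj2 howe_subst _ _ _ _ Hb).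
  intros [|i] u E; simpl in *; [inversion E; subst; auto|destruct i; discriminate].
Qed.

Lemma howe_nat v w : HV [] Nat v w -> v = w.
Proof.
  assert (forall G t v w, HV G t v w -> G = [] -> t = Nat -> v = w).
  { apply (howe_v_min _ _ osem (fun G t v w => G = [] -> t = Nat -> v = w) (fun _ _ _ _ => True));
    intros; subst; try discriminate; auto.
    - destruct i; discriminate.
    - apply (proj1 (proj2 (proj2 (proj1 (bisim_sim _ _ _ Hscott))))).
      apply ov_closed. auto.
    - rewrite H0; auto. apply (proj1 (proj2 (proj2 (proj1 (bisim_sim _ _ _ Hscott))))).
      apply ov_closed. auto. }
  intros Hv; eapply H; eauto.
Qed.

Lemma hv_bv t (v u w : val) : HV [] t v u -> BV t u w -> HV [] t v w.
Proof. intros H1 H2. eapply (howe_ov _ _ _ Hscott); eauto. apply (closed_ov _ _ _ Hscott). auto. Qed.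

Lemma hc_bc t (v u w : com) : HC [] t v u -> BC t u w -> HC [] t v w.
Proof. intros H1 H2. eapply (howe_oc _ _ _ Hscott); eauto. apply (closed_oc _ _ _ Hscott). auto. Qed.

End Howe2.

Section Key.
Variable Sg : signature.
Local Notation val := (val Sg).
Local Notation com := (com Sg).
Local Notation tree := (tree Sg).
Local Notation config := (config Sg).
Variable O : Type.
Variable osem : O -> tree unit -> Prop.
Hypothesis Hscott : forall o, scott_open (osem o).
Hypothesis Hdec : decomposable osem.

Local Notation BV := (bisim_v osem).
Local Notation BC := (bisim_c osem).
Local Notation OV := (open_v BV).
Local Notation OC := (open_c BC).
Local Notation HV := (howe_v Sg O osem).
Local Notation HC := (howe_c Sg O osem).
Local Notation ot M := (optree_cfg (Sg := Sg) ([], M)).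
Local Notation ap n M := (approx Sg n ([], M)).

Lemma lift_le_l (R : val -> val -> Prop) a a' b : tle a' a -> lift osem R a b -> lift osem R a' b.
Proof.
  intros H1 H2 A o H. apply H2. eapply (osem_up _ _ _ Hscott); [|exact H]. apply tle_restrict; auto.
Qed.

Lemma lift_le_r (R : val -> val -> Prop) a b b' : tle b b' -> lift osem R a b -> lift osem R a b'.
Proof.
  intros H1 H2 A o H. apply H2 in H. eapply (osem_up _ _ _ Hscott); [|exact H]. apply tle_restrict; auto.
Qed.

Lemma finish t a (M N : com) : lift osem (HV [] t) a (ot M) -> BC t M N -> lift osem (HV [] t) a (ot N).
Proof.
  intros H1 H2.
  pose proof (proj1 (proj2 (proj2 (proj2 (proj1 (bisim_sim _ _ _ Hscott))))) _ _ _ H2) as H3.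
  unfold optree in H3.
  eapply (lift_mono _ _ _ Hscott); [|exact (lift_comp _ _ _ Hscott _ _ _ _ _ H1 H3)].
  intros x z [y [Hxy Hyz]]. eapply (hv_bv _ _ _ Hscott); eauto.
Qed.

Lemma finish_oc t a (M N : com) : lift osem (HV [] t) a (ot M) -> OC [] t M N -> lift osem (HV [] t) a (ot N).
Proof. intros H1 H2. eapply finish; eauto. apply oc_closed; auto. Qed.

Lemma approx_S_step n (c c' : config) : terminal c = false -> step c = Some c' ->
  approx Sg (S n) c = approx Sg n c'.
Proof. intros T E. simpl. rewrite T, E. reflexivity. Qed.

Lemma approx_S_stuck n (c : config) : terminal c = false -> step c = None -> approx Sg (S n) c = Bot.
Proof. intros T E. simpl. rewrite T, E. reflexivity. Qed.

Lemma approx_S_term n (c : config) : terminal c = true -> approx Sg (S n) c = shape (approx Sg n) c.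
Proof. intros T. simpl. rewrite T. reflexivity. Qed.

Lemma canon_arr (v : val) a b : tv [] v (Arr a b) -> exists m, v = VLam a m.
Proof.
  intros H. inversion H; subst; eauto. destruct n; discriminate.
Qed.

Lemma approx_ret_le k (x : com) (v : val) : tle (approx Sg k ([x], CRet v)) (ap k (subst1 x v)).
Proof.
  destruct k; [constructor|]. rewrite (approx_S_step k ([x], CRet v) ([], subst1 x v)); auto.
  apply approx_mono.
Qed.

Lemma key n : forall t M N, HC [] t M N -> lift osem (HV [] t) (ap n M) (ot N).
Proof.
  induction n as [|n IH]; intros t0 M0 N0 H; [apply (lift_bot _ _ _ Hscott)|].
  remember (@nil ty) as G0 eqn:EG.
  destruct H as [G t1 t' v v' w w' N Hv Hw HB | G t v v' N Hv HB | G t t' m m' n0 n' N Hm Hn HB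
     | G r t v v' N Hv HB | G t v v' m m' n0 n' N Hv Hm Hn HB | G t s n1 ms ms' N Ea L1 L2 Hms HB
     | G t s n1 v v' ms ms' N Ea Hv L1 L2 Hms HB | G t s v v' N Ea Hv HB
     | G t s v v' w w' N Ea Hv Hw HB]; subst G.
  -
    destruct v as [| | |t0 b|]; try (rewrite approx_S_stuck; auto; apply (lift_bot _ _ _ Hscott)).
    inversion Hv as [| | | |G' t2 t2' m m' W Hb Hov]; subst.
    rewrite (approx_S_step n _ ([], subst1 b w)); auto.
    assert (Tw := proj1 (howe_typed _ _ osem) _ _ _ _ Hw).
    specialize (IH _ _ _ (howe_subst1 _ _ _ Hscott _ _ _ _ _ _ Hb Hw)).
    rewrite <- (optree_step _ ([], CApp (VLam t0 m') w')) in IH; auto.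
    eapply finish; [exact IH|].
    eapply (proj2 (bisim_trans_both _ _ _ Hscott)); [|apply oc_closed; exact HB].
    apply (proj2 (proj2 (proj2 (proj2 (proj1 (bisim_sim _ _ _ Hscott)))))) with (t' := t0).
    + apply ov_closed; auto.
    + apply Tw.
  -
    rewrite approx_S_term; auto. rewrite shape_ret.
    eapply finish_oc; [|exact HB].
    rewrite (optree_terminal _ ([], CRet v')); auto. rewrite shape_ret.
    apply (lift_trel _ _ _ Hscott) with (Q := HV [] t); auto. constructor; auto.
  -
    rewrite (approx_S_step n _ ([n0], m)); auto.
    eapply finish_oc; [|exact HB].
    rewrite (optree_step _ ([], CLet m' n') ([n'], m')); auto.
    eapply lift_le_l; [apply (approx_app Sg n n [] [n0] m); auto|].
    eapply lift_le_l; [apply (@bind_mono Sg _ _ (ap n m) (ap n m) (fun v => approx Sg n ([n0], CRet v)) (fun v => ap n (subst1 n0 v))); [apply tle_refl|]; intros; apply approx_ret_le|].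
    eapply lift_le_r; [apply (optree_bind Sg [] [n'] m')|].
    eapply (bind_lift _ _ _ Hscott Hdec); [apply (IH _ _ _ Hm)|].
    intros x y Hxy. simpl.
    rewrite (optree_step _ ([n'], CRet y) ([], subst1 n' y)); auto.
    apply IH. eapply (howe_subst1 _ _ _ Hscott); eauto.
  -
    pose proof (proj1 (howe_typed _ _ osem) _ _ _ _ Hv) as [Tv Tv'].
    destruct (canon_arr _ _ _ Tv) as [b ->]. destruct (canon_arr _ _ _ Tv') as [b' ->].
    set (U := fun (x : val) => VLam r (CLet (CFix (ren_v S x)) (CApp (VVar Sg 0) (VVar Sg 1)))).
    rewrite (approx_S_step n _ ([], CApp (VLam (Arr r t) b) (U (VLam (Arr r t) b)))); auto.
    eapply finish_oc; [|exact HB].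
    rewrite (optree_step _ ([], CFix (VLam (Arr r t) b')) ([], CApp (VLam (Arr r t) b') (U (VLam (Arr r t) b')))); auto.
    apply IH. eapply (hc_app' _ _ _ Hscott); [exact Hv|].
    unfold U. apply (hc_lam _ _ _ Hscott). eapply (hc_let' _ _ _ Hscott).
    + apply (hc_fix' _ _ _ Hscott). apply (proj1 (howe_ren _ _ osem) _ _ _ _ Hv).
      intros i u Hi. destruct i; discriminate.
    + apply (proj2 (howe_refl _ _ osem Hscott)). econstructor; constructor; reflexivity.
  -
    pose proof (howe_nat _ _ _ Hscott _ _ Hv) as <-.
    pose proof (proj1 (howe_typed _ _ osem) _ _ _ _ Hv) as [Tv _].
    eapply finish_oc; [|exact HB].
    destruct v; try (rewrite approx_S_stuck; auto; apply (lift_bot _ _ _ Hscott)).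
    + rewrite (approx_S_step n _ ([], m)); auto.
      rewrite (optree_step _ ([], CCase (VZ Sg) m' n') ([], m')); auto.
    + rewrite (approx_S_step n _ ([], subst1 n0 v)); auto.
      rewrite (optree_step _ ([], CCase (VS v) m' n') ([], subst1 n' v)); auto.
      apply IH. eapply (howe_subst1 _ _ _ Hscott); eauto.
      apply (proj1 (howe_refl _ _ osem Hscott)). inversion Tv; auto.
  -
    rewrite approx_S_term; auto. eapply finish_oc; [|exact HB].
    rewrite (optree_terminal _ ([], COpF s ms')); auto.
    rewrite !shape_opF.
    destruct (shF_cases Sg s (eq_refl (arity_of s))) as [E|[n2 [p [idx [Ea' [Hidx E]]]]]].
    + rewrite E. apply (lift_bot _ _ _ Hscott).
    + rewrite !E. apply (node_lift _ _ _ Hscott Hdec). intros i. apply IH. apply Hms.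
      rewrite Ea in Ea'. injection Ea' as <-. apply Hidx.
  -
    pose proof (howe_nat _ _ _ Hscott _ _ Hv) as <-.
    rewrite approx_S_term; auto. eapply finish_oc; [|exact HB].
    rewrite (optree_terminal _ ([], COpPF s v ms')); auto.
    rewrite !shape_opPF. destruct (num_of v) as [pv|]; [|apply (lift_bot _ _ _ Hscott)].
    destruct (shPF_cases Sg s pv (eq_refl (arity_of s))) as [E|[n2 [p [idx [Ea' [Hidx E]]]]]].
    + rewrite E. apply (lift_bot _ _ _ Hscott).
    + rewrite !E. apply (node_lift _ _ _ Hscott Hdec). intros i. apply IH. apply Hms.
      rewrite Ea in Ea'. injection Ea' as <-. apply Hidx.
  -
    rewrite approx_S_term; auto. eapply finish_oc; [|exact HB].
    rewrite (optree_terminal _ ([], COpI s v')); auto.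
    rewrite !shape_opI.
    destruct (shI_cases Sg s (eq_refl (arity_of s))) as [E|[p [idx [Ea' E]]]].
    + rewrite E. apply (lift_bot _ _ _ Hscott).
    + rewrite !E. apply (node_lift _ _ _ Hscott Hdec). intros i. apply IH.
      eapply (hc_app' _ _ _ Hscott); [exact Hv|].
      apply (proj1 (howe_refl _ _ osem Hscott)). apply numeral_typed.
  -
    pose proof (howe_nat _ _ _ Hscott _ _ Hv) as <-.
    rewrite approx_S_term; auto. eapply finish_oc; [|exact HB].
    rewrite (optree_terminal _ ([], COpPI s v w')); auto.
    rewrite !shape_opPI. destruct (num_of v) as [pv|]; [|apply (lift_bot _ _ _ Hscott)].
    destruct (shPI_cases Sg s pv (eq_refl (arity_of s))) as [E|[p [idx [Ea' E]]]].
    + rewrite E. apply (lift_bot _ _ _ Hscott).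
    + rewrite !E. apply (node_lift _ _ _ Hscott Hdec). intros i. apply IH.
      eapply (hc_app' _ _ _ Hscott); [exact Hw|].
      apply (proj1 (howe_refl _ _ osem Hscott)). apply numeral_typed.
Qed.

Lemma key_full t (M N : com) : HC [] t M N -> lift osem (HV [] t) (optree M) (optree N).
Proof.
  intros H A o HM. unfold omod, optree in *.
  destruct (proj2 (Hscott o) (fun k => restrict A (ap k M))) with (t := restrict A (ot M))
    as [k Hk]; auto.
  - intros k. apply tle_restrict. apply approx_mono.
  - split.
    + intros k. apply tle_restrict. apply approx_le_optree.
    + intros u Hu. apply approx_sup. auto.
  - exact (key k _ _ _ H A o Hk).
Qed.

End Key.

Inductive plus {A} (R : A -> A -> Prop) : A -> A -> Prop :=
| pl_one x y : R x y -> plus R x y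
| pl_step x y z : R x y -> plus R y z -> plus R x z.

Lemma plus_trans {A} (R : A -> A -> Prop) x y z : plus R x y -> plus R y z -> plus R x z.
Proof. induction 1; intros; [eapply pl_step; eauto|eapply pl_step; eauto]. Qed.

Lemma plus_map {A B} (R : A -> A -> Prop) (R' : B -> B -> Prop) (f : A -> B) x y :
  (forall a b, R a b -> R' (f a) (f b)) -> plus R x y -> plus R' (f x) (f y).
Proof. intros Hf; induction 1; [apply pl_one; auto|eapply pl_step; eauto]. Qed.

Lemma plus_ends {A} (R : A -> A -> Prop) (P : A -> Prop) x y :
  (forall a b, R a b -> P a /\ P b) -> plus R x y -> P x /\ P y.
Proof. intros HR; induction 1; [auto|split; [apply (HR _ _ H)|apply IHplus]]. Qed.

Section Sym.
Variable Sg : signature.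
Local Notation val := (val Sg).
Local Notation com := (com Sg).
Local Notation tree := (tree Sg).
Variable O : Type.
Variable osem : O -> tree unit -> Prop.
Hypothesis Hscott : forall o, scott_open (osem o).
Hypothesis Hdec : decomposable osem.

Local Notation BV := (bisim_v osem).
Local Notation BC := (bisim_c osem).
Local Notation OV := (open_v BV).
Local Notation OC := (open_c BC).
Local Notation HV := (howe_v Sg O osem).
Local Notation HC := (howe_c Sg O osem).
Local Notation PV G t := (plus (HV G t)).
Local Notation PC G t := (plus (HC G t)).

Lemma pv_typed G t (v w : val) : PV G t v w -> tv G v t /\ tv G w t.
Proof. apply (plus_ends _ (fun x => tv G x t)). intros a b; apply (proj1 (howe_typed _ _ osem)). Qed.
Lemma pc_typed G t (v w : com) : PC G t v w -> tc G v t /\ tc G w t.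
Proof. apply (plus_ends _ (fun x => tc G x t)). intros a b; apply (proj2 (howe_typed _ _ osem)). Qed.

Ltac ptyp1 H := first [destruct (pv_typed _ _ _ _ H) | destruct (pc_typed _ _ _ _ H)].

Let hvr G t (v : val) (H : tv G v t) : HV G t v v := proj1 (howe_refl _ _ osem Hscott) _ _ _ H.
Let hcr G t (m : com) (H : tc G m t) : HC G t m m := proj2 (howe_refl _ _ osem Hscott) _ _ _ H.

Lemma pv_succ G v v' : PV G Nat v v' -> PV G Nat (VS v) (VS v').
Proof. apply plus_map. intros; apply (hc_succ _ _ _ Hscott); auto. Qed.

Lemma pv_lam G t t' m m' : PC (t :: G) t' m m' -> PV G (Arr t t') (VLam t m) (VLam t m').
Proof. apply plus_map. intros; apply (hc_lam _ _ _ Hscott); auto. Qed.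

Lemma pc_app G t t' v v' w w' : PV G (Arr t t') v v' -> PV G t w w' -> PC G t' (CApp v w) (CApp v' w').
Proof.
  intros H1 H2. ptyp1 H1; ptyp1 H2. eapply plus_trans.
  - eapply (plus_map _ _ (fun x => CApp x w)); [|exact H1]. intros; eapply (hc_app' _ _ _ Hscott); eauto.
  - eapply (plus_map _ _ (fun x => CApp v' x)); [|exact H2]. intros; eapply (hc_app' _ _ _ Hscott); eauto.
Qed.

Lemma pc_ret G t v v' : PV G t v v' -> PC G t (CRet v) (CRet v').
Proof. apply plus_map. intros; apply (hc_ret' _ _ _ Hscott); auto. Qed.

Lemma pc_let G t t' m m' n n' : PC G t m m' -> PC (t :: G) t' n n' -> PC G t' (CLet m n) (CLet m' n').
Proof.
  intros H1 H2. ptyp1 H1; ptyp1 H2. eapply plus_trans.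
  - eapply (plus_map _ _ (fun x => CLet x n)); [|exact H1]. intros; eapply (hc_let' _ _ _ Hscott); eauto.
  - eapply (plus_map _ _ (fun x => CLet m' x)); [|exact H2]. intros; eapply (hc_let' _ _ _ Hscott); eauto.
Qed.

Lemma pc_fix G r t v v' : PV G (Arr (Arr r t) (Arr r t)) v v' -> PC G (Arr r t) (CFix v) (CFix v').
Proof. apply plus_map. intros; apply (hc_fix' _ _ _ Hscott); auto. Qed.

Lemma pc_case G t v v' m m' n n' : PV G Nat v v' -> PC G t m m' -> PC (Nat :: G) t n n' ->
  PC G t (CCase v m n) (CCase v' m' n').
Proof.
  intros H1 H2 H3. ptyp1 H1; ptyp1 H2; ptyp1 H3. eapply plus_trans; [|eapply plus_trans].
  - eapply (plus_map _ _ (fun x => CCase x m n)); [|exact H1]. intros; eapply (hc_case' _ _ _ Hscott); eauto.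
  - eapply (plus_map _ _ (fun x => CCase v' x n)); [|exact H2]. intros; eapply (hc_case' _ _ _ Hscott); eauto.
  - eapply (plus_map _ _ (fun x => CCase v' m' x)); [|exact H3]. intros; eapply (hc_case' _ _ _ Hscott); eauto.
Qed.

Lemma pc_opI G t s v v' : arity_of s = AInf -> PV G (Arr Nat t) v v' -> PC G t (COpI s v) (COpI s v').
Proof. intros E. apply plus_map. intros; apply (hc_opI' _ _ _ Hscott); auto. Qed.

Lemma pc_opPI G t s v v' w w' : arity_of s = APInf -> PV G Nat v v' -> PV G (Arr Nat t) w w' ->
  PC G t (COpPI s v w) (COpPI s v' w').
Proof.
  intros E H1 H2. ptyp1 H1; ptyp1 H2. eapply plus_trans.
  - eapply (plus_map _ _ (fun x => COpPI s x w)); [|exact H1]. intros; eapply (hc_opPI' _ _ _ Hscott); eauto.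
  - eapply (plus_map _ _ (fun x => COpPI s v' x)); [|exact H2]. intros; eapply (hc_opPI' _ _ _ Hscott); eauto.
Qed.

Definition lrel (R : com -> com -> Prop) n (ms ms' : list com) :=
  length ms = n /\ length ms' = n /\ forall i, i < n -> R (nth i ms (dflt Sg)) (nth i ms' (dflt Sg)).

Lemma lrel_plus (R : com -> com -> Prop) (P : com -> Prop) :
  (forall x, P x -> R x x) -> forall ms n ms', (forall x, In x ms -> P x) -> (forall x, In x ms' -> P x) ->
  lrel (plus R) n ms ms' -> plus (lrel R n) ms ms'.
Proof.
  intros HR. induction ms as [|a ms IHms]; intros n ms' H1 H2 [L1 [L2 H]].
  - simpl in L1; subst. destruct ms'; [|discriminate]. apply pl_one. split; auto. split; auto. intros; lia.
  - destruct ms' as [|b ms']; simpl in *; [lia|]. subst n.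
    assert (Hab : plus R a b) by (apply (H 0); lia).
    assert (Hrest : plus (lrel R (length ms)) ms ms').
    { apply IHms; auto. split; auto. split; [lia|]. intros i Hi. apply (H (S i)). lia. }
    eapply plus_trans.
    + eapply (plus_map _ _ (fun x => x :: ms)); [|exact Hab]. intros x y Hxy.
      split; auto. split; auto. intros [|i] Hi; simpl; auto. apply HR. apply H1. right.
      apply nth_In. lia.
    + eapply (plus_map _ _ (fun l => b :: l)); [|exact Hrest]. intros l l' [M1 [M2 M3]].
      split; simpl; auto. split; simpl; auto. intros [|i] Hi; simpl; auto. apply M3. lia.
Qed.

Lemma nth_in_P (ms : list com) (P : com -> Prop) n :
  length ms = n -> (forall i, i < n -> P (nth i ms (dflt Sg))) -> forall x, In x ms -> P x.
Proof. intros L H x Hx. destruct (In_nth _ _ (dflt Sg) Hx) as [i [Hi <-]]. apply H. lia. Qed.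

Lemma pc_opF G t s n ms ms' : arity_of s = AFin n -> length ms = n -> length ms' = n ->
  (forall i, i < n -> PC G t (nth i ms (dflt Sg)) (nth i ms' (dflt Sg))) ->
  PC G t (COpF s ms) (COpF s ms').
Proof.
  intros E L1 L2 H.
  assert (HP : plus (lrel (HC G t) n) ms ms').
  { apply lrel_plus with (P := fun x => tc G x t).
    - intros; apply hcr; auto.
    - apply nth_in_P with (n := n); auto. intros i Hi. apply (pc_typed _ _ _ _ (H i Hi)).
    - apply nth_in_P with (n := n); auto. intros i Hi. apply (pc_typed _ _ _ _ (H i Hi)).
    - split; auto. }
  eapply (plus_map _ _ (COpF s)); [|exact HP]. intros l l' [M1 [M2 M3]].
  eapply (hc_opF' _ _ _ Hscott); eauto.
Qed.

Lemma pc_opPF G t s n v v' ms ms' : arity_of s = APFin n -> PV G Nat v v' ->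
  length ms = n -> length ms' = n ->
  (forall i, i < n -> PC G t (nth i ms (dflt Sg)) (nth i ms' (dflt Sg))) ->
  PC G t (COpPF s v ms) (COpPF s v' ms').
Proof.
  intros E Hv L1 L2 H. ptyp1 Hv.
  assert (HP : plus (lrel (HC G t) n) ms ms').
  { apply lrel_plus with (P := fun x => tc G x t).
    - intros; apply hcr; auto.
    - apply nth_in_P with (n := n); auto. intros i Hi. apply (pc_typed _ _ _ _ (H i Hi)).
    - apply nth_in_P with (n := n); auto. intros i Hi. apply (pc_typed _ _ _ _ (H i Hi)).
    - split; auto. }
  eapply plus_trans.
  - eapply (plus_map _ _ (fun x => COpPF s x ms)); [|exact Hv]. intros; eapply (hc_opPF' _ _ _ Hscott); eauto.
    intros i Hi. apply hcr. apply (pc_typed _ _ _ _ (H i Hi)).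
  - eapply (plus_map _ _ (COpPF s v')); [|exact HP]. intros l l' [M1 [M2 M3]].
    eapply (hc_opPF' _ _ _ Hscott); eauto.
Qed.

Lemma ov_pv G t (v w : val) : OV G t v w -> PV G t v w.
Proof. intros H. apply pl_one. apply (ov_howe _ _ _ Hscott). auto. Qed.
Lemma oc_pc G t (v w : com) : OC G t v w -> PC G t v w.
Proof. intros H. apply pl_one. apply (oc_howe _ _ _ Hscott). auto. Qed.

Lemma howe_sym :
  (forall G t v w, HV G t v w -> PV G t w v) /\ (forall G t m n, HC G t m n -> PC G t n m).
Proof.
  apply howe_ind; intros;
  repeat match goal with HH : open_v _ _ _ _ _ |- _ => apply (ov_sym _ _ _ Hscott) in HH; apply ov_pv in HH
                    | HH : open_c _ _ _ _ _ |- _ => apply (oc_sym _ _ _ Hscott) in HH; apply oc_pc in HH end.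
  - auto.
  - auto.
  - auto.
  - eapply plus_trans; [eauto|]. apply pv_succ; auto.
  - eapply plus_trans; [eauto|]. apply pv_lam; auto.
  - eapply plus_trans; [eauto|]. eapply pc_app; eauto.
  - eapply plus_trans; [eauto|]. eapply pc_ret; eauto.
  - eapply plus_trans; [eauto|]. eapply pc_let; eauto.
  - eapply plus_trans; [eauto|]. eapply pc_fix; eauto.
  - eapply plus_trans; [eauto|]. eapply pc_case; eauto.
  - eapply plus_trans; [eauto|]. eapply pc_opF; eauto;
    try (intros i Hi; match goal with HH : forall i, i < _ -> plus _ _ _ |- _ => apply HH; auto end).
  - eapply plus_trans; [eauto|]. eapply pc_opPF; eauto;
    try (intros i Hi; match goal with HH : forall i, i < _ -> plus _ _ _ |- _ => apply HH; auto end).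
  - eapply plus_trans; [eauto|]. eapply pc_opI; eauto.
  - eapply plus_trans; [eauto|]. eapply pc_opPI; eauto.
Qed.

Lemma plus_sym {A} (R : A -> A -> Prop) x y : (forall a b, R a b -> plus R b a) -> plus R x y -> plus R y x.
Proof.
  intros HR. induction 1; auto. eapply plus_trans; eauto.
Qed.

Lemma closed_howe_bisim :
  (forall t v w, HV [] t v w -> BV t v w) /\ (forall t m n, HC [] t m n -> BC t m n).
Proof.
  set (Rv := fun t (v w : val) => PV [] t v w).
  set (Rc := fun t (m n : com) => PC [] t m n).
  assert (HA : app_sim osem Rv Rc /\ symmetric_fam Rv Rc).
  { split; [split; [|split; [|split; [|split]]]|split]; unfold Rv, Rc.
    - intros t v w H. apply pv_typed; auto.
    - intros t v w H. apply pc_typed; auto.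
    - intros v w H. induction H.
      + apply (howe_nat _ _ _ Hscott); auto.
      + rewrite (howe_nat _ _ _ Hscott _ _ H). auto.
    - intros t m n H. induction H.
      + eapply (lift_mono _ _ _ Hscott); [|apply (key_full _ _ _ Hscott Hdec); eauto].
        intros; apply pl_one; auto.
      + eapply (lift_mono _ _ _ Hscott);
        [|exact (lift_comp _ _ _ Hscott _ _ _ _ _ (key_full _ _ _ Hscott Hdec _ _ _ H) IHplus)].
        intros a c [b [Hab Hbc]]. eapply pl_step; eauto.
    - intros t' t v w H u Hu.
      eapply (plus_map _ _ (fun x => CApp x u)); [|exact H].
      intros; eapply (hc_app' _ _ _ Hscott); eauto.
    - intros t v w H. apply plus_sym; auto. intros; apply (proj1 howe_sym); auto.
    - intros t v w H. apply plus_sym; auto. intros; apply (proj2 howe_sym); auto. }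
  split.
  - intros t v w H. exists Rv, Rc. split; [apply HA|]. split; [apply HA|]. apply pl_one; auto.
  - intros t v w H. exists Rv, Rc. split; [apply HA|]. split; [apply HA|]. apply pl_one; auto.
Qed.

Lemma hsub_closed G g : closed_inst G g -> hsub Sg O osem G [] g g.
Proof. intros Hg i u E. apply hvr. apply Hg; auto. Qed.

Lemma howe_ov_open G t (v w : val) : HV G t v w -> OV G t v w.
Proof.
  intros H. destruct (proj1 (howe_typed _ _ osem) _ _ _ _ H).
  split; [auto|split; [auto|]]. intros g Hg. apply (proj1 closed_howe_bisim).
  apply (proj1 (howe_subst _ _ _ Hscott) _ _ _ _ H). apply hsub_closed; auto.
Qed.

Lemma howe_oc_open G t (v w : com) : HC G t v w -> OC G t v w.
Proof.
  intros H. destruct (proj2 (howe_typed _ _ osem) _ _ _ _ H).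
  split; [auto|split; [auto|]]. intros g Hg. apply (proj2 closed_howe_bisim).
  apply (proj2 (howe_subst _ _ _ Hscott) _ _ _ _ H). apply hsub_closed; auto.
Qed.

End Sym.

Lemma Forall2_nth' {A B} (R : A -> B -> Prop) l l' d d' :
  Forall2 R l l' -> length l = length l' /\ forall i, i < length l -> R (nth i l d) (nth i l' d').
Proof.
  induction 1; simpl; [split; auto; intros; lia|].
  destruct IHForall2 as [L H1]. split; [lia|]. intros [|i] Hi; simpl; auto. apply H1. lia.
Qed.

Theorem theorem3 (Sg : signature) (O : Type) (osem : O -> tree Sg unit -> Prop) :
  (forall o : O, @scott_open Sg (osem o)) ->
  @decomposable Sg O osem ->
  @compatible Sg (@open_v Sg (@bisim_v Sg O osem)) (@open_c Sg (@bisim_c Sg O osem)).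
Proof.
  intros Hs Hd.
  pose proof (ov_howe _ _ _ Hs) as A1. pose proof (oc_howe _ _ _ Hs) as A2.
  pose proof (howe_ov_open _ _ _ Hs Hd) as B1. pose proof (howe_oc_open _ _ _ Hs Hd) as B2.
  split; [|split; [|split; [|split; [|split; [|split; [|split; [|split; [|split; [|split; [|split; [|split; [|split]]]]]]]]]]]].
  - intros G i t E. apply (ov_refl _ _ _ Hs). constructor; auto.
  - intros G. apply (ov_refl _ _ _ Hs). constructor.
  - intros G. apply (ov_refl _ _ _ Hs). constructor.
  - intros G v w H. apply B1. apply (hc_succ _ _ _ Hs). auto.
  - intros G t t' m n H. apply B1. apply (hc_lam _ _ _ Hs). auto.
  - intros G t t' v v' w w' H1 H2. apply B2. eapply (hc_app' _ _ _ Hs); eauto.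
  - intros G t v w H. apply B2. eapply (hc_ret' _ _ _ Hs); eauto.
  - intros G t t' m m' n n' H1 H2. apply B2. eapply (hc_let' _ _ _ Hs); eauto.
  - intros G r t v w H. apply B2. eapply (hc_fix' _ _ _ Hs); eauto.
  - intros G t v w m m' n n' H1 H2 H3. apply B2. eapply (hc_case' _ _ _ Hs); eauto.
  - intros G t s n ms ms' E L H. apply B2.
    destruct (Forall2_nth' _ _ _ (dflt Sg) (dflt Sg) H) as [L' H'].
    eapply (hc_opF' _ _ _ Hs); eauto; try lia. intros i Hi. apply A2. apply H'. lia.
  - intros G t s n v w ms ms' E Hv L H. apply B2.
    destruct (Forall2_nth' _ _ _ (dflt Sg) (dflt Sg) H) as [L' H'].
    eapply (hc_opPF' _ _ _ Hs); eauto; try lia. intros i Hi. apply A2. apply H'. lia.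
  - intros G t s v w E H. apply B2. eapply (hc_opI' _ _ _ Hs); eauto.
  - intros G t s v v' w w' E H1 H2. apply B2. eapply (hc_opPI' _ _ _ Hs); eauto.
Qed.
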